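(* Let a rectangular subdivision be given by its tree structure, where each node stores the rectangle it represents and (for interior nodes) its splitting segment. Then a minimum-size segment-cover of the cells of the subdivision can be computed in time linear in the size of the tree.
   Context: A rectangular subdivision (as in a KD-tree) is obtained from an axis-aligned rectangle by recursively splitting a rectangle into two rectangles by a horizontal or vertical segment spanning it. The tree structure is a binary tree: the root stores the initial rectangle; each interior node stores its rectangle and a horizontal or vertical splitting segment dividing it into the two rectangles stored at its two children; leaves store the cells of the subdivision. The segments are the four edges of the bounding rectangle and the splitting segments. A segment covers a bounded cell if it is part of that cell's boundary, where a segment that has only an endpoint on the boundary of a cell is not considered part of that cell's boundary. The outer (unbounded) face is covered if and only if at least one of the edges of the bounding rectangle is in the cover. A segment-cover is a set of segments covering every cell (including the outer face). *)

(* Defs.v *)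
From Stdlib Require Import Reals List ZArith.
Import ListNotations.
Open Scope R_scope.

Definition point := (R * R)%type.
(* a segment is given by its two endpoints (lower/left endpoint first) *)
Definition seg := (point * point)%type.

Record rect := mkRect { rxl : R; rxh : R; ryl : R; ryh : R }.

Definition on_seg (s : seg) (z : point) : Prop :=
  exists t, 0 <= t <= 1 /\
    fst z = fst (fst s) + t * (fst (snd s) - fst (fst s)) /\
    snd z = snd (fst s) + t * (snd (snd s) - snd (fst s)).

Definition in_closed (r : rect) (z : point) : Prop :=
  rxl r <= fst z <= rxh r /\ ryl r <= snd z <= ryh r.
Definition in_open (r : rect) (z : point) : Prop :=
  rxl r < fst z < rxh r /\ ryl r < snd z < ryh r.
Definition on_boundary (r : rect) (z : point) : Prop :=
  in_closed r z /\ ~ in_open r z.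

(* a segment covers a bounded cell iff a non-degenerate piece of it lies
   on the cell's boundary (touching the boundary only in an endpoint,
   or in a single point, does not count) *)
Definition covers_cell (s : seg) (c : rect) : Prop :=
  exists p q : point, p <> q /\
    forall z, on_seg (p, q) z -> on_seg s z /\ on_boundary c z.

Inductive split := VSplit (a : R) | HSplit (b : R).

Inductive kdtree :=
| Leaf (r : rect)
| Node (r : rect) (sp : split) (l rt : kdtree).

Definition root_rect (t : kdtree) : rect :=
  match t with Leaf r => r | Node r _ _ _ => r end.

Definition split_seg (r : rect) (sp : split) : seg :=
  match sp with
  | VSplit a => ((a, ryl r), (a, ryh r))
  | HSplit b => ((rxl r, b), (rxh r, b))
  end.

(* well-formed subdivision tree: nondegenerate rectangles, splits strictly
   inside, children are exactly the two halves (left/bottom child first) *)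
Fixpoint valid_tree (t : kdtree) : Prop :=
  match t with
  | Leaf r => rxl r < rxh r /\ ryl r < ryh r
  | Node r sp l rt =>
      rxl r < rxh r /\ ryl r < ryh r /\
      match sp with
      | VSplit a => rxl r < a < rxh r /\
          root_rect l = mkRect (rxl r) a (ryl r) (ryh r) /\
          root_rect rt = mkRect a (rxh r) (ryl r) (ryh r)
      | HSplit b => ryl r < b < ryh r /\
          root_rect l = mkRect (rxl r) (rxh r) (ryl r) b /\
          root_rect rt = mkRect (rxl r) (rxh r) b (ryh r)
      end /\ valid_tree l /\ valid_tree rt
  end.

Definition boundary_edges (r : rect) : list seg :=
  [ ((rxl r, ryl r), (rxh r, ryl r));
    ((rxl r, ryh r), (rxh r, ryh r));
    ((rxl r, ryl r), (rxl r, ryh r));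
    ((rxh r, ryl r), (rxh r, ryh r)) ].

Fixpoint split_segs (t : kdtree) : list seg :=
  match t with
  | Leaf _ => []
  | Node r sp l rt => split_seg r sp :: split_segs l ++ split_segs rt
  end.

Definition segments (t : kdtree) : list seg :=
  boundary_edges (root_rect t) ++ split_segs t.

Fixpoint cells (t : kdtree) : list rect :=
  match t with
  | Leaf r => [r]
  | Node _ _ l rt => cells l ++ cells rt
  end.

Fixpoint tree_size (t : kdtree) : nat :=
  match t with
  | Leaf _ => 1
  | Node _ _ l rt => S (tree_size l + tree_size rt)
  end.

(* a segment-cover: a set of segments of the subdivision covering every
   bounded cell, and the outer face (= containing a bounding edge) *)
Definition is_segment_cover (t : kdtree) (C : list seg) : Prop :=
  (forall s, In s C -> In s (segments t)) /\
  (forall c, In c (cells t) -> exists s, In s C /\ covers_cell s c) /\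
  (exists s, In s C /\ In s (boundary_edges (root_rect t))).

(* minimum-size segment cover (sets represented by duplicate-free lists) *)
Definition is_min_segment_cover (t : kdtree) (C : list seg) : Prop :=
  NoDup C /\ is_segment_cover t C /\
  forall C', NoDup C' -> is_segment_cover t C' -> (length C <= length C')%nat.

(* 2. Machine model: a real-RAM with unit-cost operations              *)
(*    - real numbers with +, -, *, <, = (no floor), integer constants   *)

Inductive val :=
| VUnit
| VBool (b : bool)
| VReal (r : R)
| VNat (n : nat)
| VPair (v w : val).

Inductive rop := RAdd | RSub | RMul.
Inductive cmp := CLt | CEq.

Inductive exp :=
| EVar (i : nat)                  (* de Bruijn variable *)
| EUnit
| EBool (b : bool)
| EConstR (z : Z)
| EConstN (n : nat)
| EPair (e1 e2 : exp)
| EFst (e : exp)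
| ESnd (e : exp)
| EIsPair (e : exp)
| EIf (c e1 e2 : exp)
| ELet (e1 e2 : exp)              (* e2 sees the value of e1 as EVar 0 *)
| ECall (f : nat) (e : exp)
| EROp (o : rop) (e1 e2 : exp)
| ERCmp (c : cmp) (e1 e2 : exp)
| ENAdd (e1 e2 : exp)
| ENSub (e1 e2 : exp)             (* truncated subtraction *)
| ENCmp (c : cmp) (e1 e2 : exp)
| ERead (a : exp)
| EWrite (a e : exp).

(* a program: list of function bodies; function 0 is the entry point *)
Definition program := list exp.
Definition memory := nat -> val.

Definition rop_sem (o : rop) (x y : R) : R :=
  match o with RAdd => x + y | RSub => x - y | RMul => x * y end.
Definition rcmp_sem (c : cmp) (x y : R) : bool :=
  match c with
  | CLt => if Rlt_dec x y then true else false
  | CEq => if Req_dec_T x y then true else false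
  end.
Definition ncmp_sem (c : cmp) (x y : nat) : bool :=
  match c with CLt => Nat.ltb x y | CEq => Nat.eqb x y end.

Definition upd (m : memory) (a : nat) (v : val) : memory :=
  fun b => if Nat.eqb a b then v else m b.

Inductive eval (P : program) : list val -> memory -> exp -> val -> memory -> nat -> Prop :=
| ev_var env m i v : nth_error env i = Some v -> eval P env m (EVar i) v m 1
| ev_unit env m : eval P env m EUnit VUnit m 1
| ev_bool env m b : eval P env m (EBool b) (VBool b) m 1
| ev_constR env m z : eval P env m (EConstR z) (VReal (IZR z)) m 1
| ev_constN env m n : eval P env m (EConstN n) (VNat n) m 1
| ev_pair env m m1 m2 e1 e2 v1 v2 k1 k2 :
    eval P env m e1 v1 m1 k1 -> eval P env m1 e2 v2 m2 k2 ->
    eval P env m (EPair e1 e2) (VPair v1 v2) m2 (S (k1 + k2))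
| ev_fst env m m1 e v w k :
    eval P env m e (VPair v w) m1 k -> eval P env m (EFst e) v m1 (S k)
| ev_snd env m m1 e v w k :
    eval P env m e (VPair v w) m1 k -> eval P env m (ESnd e) w m1 (S k)
| ev_ispair env m m1 e v k :
    eval P env m e v m1 k ->
    eval P env m (EIsPair e) (VBool (match v with VPair _ _ => true | _ => false end)) m1 (S k)
| ev_if_true env m m1 m2 c e1 e2 v k1 k2 :
    eval P env m c (VBool true) m1 k1 -> eval P env m1 e1 v m2 k2 ->
    eval P env m (EIf c e1 e2) v m2 (S (k1 + k2))
| ev_if_false env m m1 m2 c e1 e2 v k1 k2 :
    eval P env m c (VBool false) m1 k1 -> eval P env m1 e2 v m2 k2 ->
    eval P env m (EIf c e1 e2) v m2 (S (k1 + k2))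
| ev_let env m m1 m2 e1 e2 v1 v k1 k2 :
    eval P env m e1 v1 m1 k1 -> eval P (v1 :: env) m1 e2 v m2 k2 ->
    eval P env m (ELet e1 e2) v m2 (S (k1 + k2))
| ev_call env m m1 m2 f e body a v k1 k2 :
    nth_error P f = Some body ->
    eval P env m e a m1 k1 -> eval P [a] m1 body v m2 k2 ->
    eval P env m (ECall f e) v m2 (S (k1 + k2))
| ev_rop env m m1 m2 o e1 e2 x y k1 k2 :
    eval P env m e1 (VReal x) m1 k1 -> eval P env m1 e2 (VReal y) m2 k2 ->
    eval P env m (EROp o e1 e2) (VReal (rop_sem o x y)) m2 (S (k1 + k2))
| ev_rcmp env m m1 m2 c e1 e2 x y k1 k2 :
    eval P env m e1 (VReal x) m1 k1 -> eval P env m1 e2 (VReal y) m2 k2 ->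
    eval P env m (ERCmp c e1 e2) (VBool (rcmp_sem c x y)) m2 (S (k1 + k2))
| ev_nadd env m m1 m2 e1 e2 x y k1 k2 :
    eval P env m e1 (VNat x) m1 k1 -> eval P env m1 e2 (VNat y) m2 k2 ->
    eval P env m (ENAdd e1 e2) (VNat (x + y)) m2 (S (k1 + k2))
| ev_nsub env m m1 m2 e1 e2 x y k1 k2 :
    eval P env m e1 (VNat x) m1 k1 -> eval P env m1 e2 (VNat y) m2 k2 ->
    eval P env m (ENSub e1 e2) (VNat (x - y)) m2 (S (k1 + k2))
| ev_ncmp env m m1 m2 c e1 e2 x y k1 k2 :
    eval P env m e1 (VNat x) m1 k1 -> eval P env m1 e2 (VNat y) m2 k2 ->
    eval P env m (ENCmp c e1 e2) (VBool (ncmp_sem c x y)) m2 (S (k1 + k2))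
| ev_read env m m1 a x k :
    eval P env m a (VNat x) m1 k -> eval P env m (ERead a) (m1 x) m1 (S k)
| ev_write env m m1 m2 a e x v k1 k2 :
    eval P env m a (VNat x) m1 k1 -> eval P env m1 e v m2 k2 ->
    eval P env m (EWrite a e) VUnit (upd m2 x v) (S (k1 + k2)).

Definition empty_memory : memory := fun _ => VUnit.

Definition runs (P : program) (v w : val) (k : nat) : Prop :=
  exists body m', nth_error P 0 = Some body /\ eval P [v] empty_memory body w m' k.

Definition enc_point (p : point) : val := VPair (VReal (fst p)) (VReal (snd p)).
Definition enc_seg (s : seg) : val := VPair (enc_point (fst s)) (enc_point (snd s)).
Definition enc_rect (r : rect) : val :=
  VPair (VPair (VReal (rxl r)) (VReal (rxh r))) (VPair (VReal (ryl r)) (VReal (ryh r))).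

Fixpoint enc_tree (t : kdtree) : val :=
  match t with
  | Leaf r => VPair (VBool false) (enc_rect r)
  | Node r sp l rt =>
      VPair (VBool true)
        (VPair (enc_rect r) (VPair (enc_seg (split_seg r sp)) (VPair (enc_tree l) (enc_tree rt))))
  end.

Fixpoint enc_segs (l : list seg) : val :=
  match l with
  | [] => VUnit
  | s :: l' => VPair (enc_seg s) (enc_segs l')
  end.

(* Main.v *)
Require Import Defs.
From Stdlib Require Import Reals List.
From Stdlib Require Import Reals List Lia Lra ZArith.
Import ListNotations.

Import ListNotations.
Open Scope nat_scope.

Fixpoint vif (b : bool) (v2 v3 : val) : val :=
  match v2, v3 with
  | VNat x, VNat y => VNat (if b then x else y)
  | VBool x, VBool y => VBool (if b then x else y)
  | VReal x, VReal y => VReal (if b then x else y)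
  | VUnit, VUnit => VUnit
  | VPair a1 a2, VPair b1 b2 => VPair (vif b a1 b1) (vif b a2 b2)
  | _, _ => if b then v2 else v3
  end.

Lemma vif_spec b v2 v3 : vif b v2 v3 = if b then v2 else v3.
Proof.
  revert v3; induction v2; intros v3; destruct v3; destruct b; simpl; auto;
  try (rewrite IHv2_1, IHv2_2; reflexivity).
Qed.

Section Run.
Variable cf : nat -> val -> option val.
Variable bd : nat -> val -> nat.

Definition cadd (a b : nat * nat) : nat * nat := (S (fst a + fst b), snd a + snd b).
Definition csuc (a : nat * nat) : nat * nat := (S (fst a), snd a).
Definition cmax (a b : nat * nat) : nat * nat := (Nat.max (fst a) (fst b), snd a + snd b).
Definition c1 : nat * nat := (1, 0).

Fixpoint run_e (env : list val) (e : Defs.exp) : option (val * (nat * nat)) :=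
  match e with
  | EVar i => match nth_error env i with Some v => Some (v, c1) | None => None end
  | EUnit => Some (VUnit, c1)
  | EBool b => Some (VBool b, c1)
  | EConstR z => Some (VReal (IZR z), c1)
  | EConstN n => Some (VNat n, c1)
  | EPair e1 e2 =>
      match run_e env e1 with
      | Some (v1, k1) => match run_e env e2 with
                         | Some (v2, k2) => Some (VPair v1 v2, cadd k1 k2)
                         | None => None end
      | None => None end
  | EFst e => match run_e env e with Some (VPair v _, k) => Some (v, csuc k) | _ => None end
  | ESnd e => match run_e env e with Some (VPair _ w, k) => Some (w, csuc k) | _ => None end
  | EIsPair e => match run_e env e with
                 | Some (v, k) => Some (VBool (match v with VPair _ _ => true | _ => false end), csuc k)
                 | None => None end
  | EIf c e1 e2 =>
      match run_e env c with
      | Some (VBool b, k1) =>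
          match run_e env e1, run_e env e2 with
          | Some (v2, k2), Some (v3, k3) => Some (vif b v2 v3, cadd k1 (cmax k2 k3))
          | Some (v2, k2), None => if b then Some (v2, cadd k1 k2) else None
          | None, Some (v3, k3) => if b then None else Some (v3, cadd k1 k3)
          | None, None => None
          end
      | _ => None end
  | ELet e1 e2 =>
      match run_e env e1 with
      | Some (v1, k1) => match run_e (v1 :: env) e2 with
                         | Some (v, k2) => Some (v, cadd k1 k2)
                         | None => None end
      | None => None end
  | ECall f e =>
      match run_e env e with
      | Some (a, k1) => match cf f a with
                        | Some v => Some (v, (S (fst k1), snd k1 + bd f a))
                        | None => None end
      | None => None end
  | EROp o e1 e2 =>
      match run_e env e1 with
      | Some (VReal x, k1) => match run_e env e2 with
                         | Some (VReal y, k2) => Some (VReal (rop_sem o x y), cadd k1 k2)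
                         | _ => None end
      | _ => None end
  | ERCmp c e1 e2 =>
      match run_e env e1 with
      | Some (VReal x, k1) => match run_e env e2 with
                         | Some (VReal y, k2) => Some (VBool (rcmp_sem c x y), cadd k1 k2)
                         | _ => None end
      | _ => None end
  | ENAdd e1 e2 =>
      match run_e env e1 with
      | Some (VNat x, k1) => match run_e env e2 with
                         | Some (VNat y, k2) => Some (VNat (x + y), cadd k1 k2)
                         | _ => None end
      | _ => None end
  | ENSub e1 e2 =>
      match run_e env e1 with
      | Some (VNat x, k1) => match run_e env e2 with
                         | Some (VNat y, k2) => Some (VNat (x - y), cadd k1 k2)
                         | _ => None end
      | _ => None end
  | ENCmp c e1 e2 =>
      match run_e env e1 with
      | Some (VNat x, k1) => match run_e env e2 with
                         | Some (VNat y, k2) => Some (VBool (ncmp_sem c x y), cadd k1 k2)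
                         | _ => None end
      | _ => None end
  | ERead _ => None
  | EWrite _ _ => None
  end.
End Run.

Definition cf_sound (P : program) (m : memory) (cf : nat -> val -> option val) (bd : nat -> val -> nat) :=
  forall f a v, cf f a = Some v -> exists body k, nth_error P f = Some body /\
     eval P [a] m body v m k /\ (k <= bd f a)%nat.

Ltac dsome H := 
  match type of H with
  | context [match ?X with _ => _ end] => 
      let E := fresh "E" in destruct X eqn:E; try discriminate H
  end.

Lemma run_sound P m cf bd : cf_sound P m cf bd ->
  forall e env v kb, run_e cf bd env e = Some (v, kb) ->
  exists k, eval P env m e v m k /\ (k <= fst kb + snd kb)%nat.
Proof.
  intros Hcf e; induction e; intros env v kb H; simpl in H;
  unfold cadd, csuc, cmax, c1 in H;
  repeat (match type of H with
          | Some _ = Some _ => idtac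
          | _ => dsome H
          end);
  repeat match goal with
         | p : (val * nat)%type |- _ => destruct p
         | v : val |- _ => match goal with
                           | H : context [match v with _ => _ end] |- _ => destruct v; try discriminate H
                           end
         end.
  all: try (injection H; intros; subst).
  all: repeat match goal with
         | IH : forall env v kb, run_e _ _ env ?e = Some (v, kb) -> _ ,
           E : run_e _ _ ?env ?e = Some (?v, ?k) |- _ =>
             let x := fresh "x" in
             destruct (IH _ _ _ E) as [x [? ?]]; clear E
         end.
  all: try (rewrite vif_spec).
  all: try match goal with b : bool |- _ => destruct b; try discriminate end.
  all: try (injection H; intros; subst).
  all: try match goal with
         | E : _ _ _ = Some _ |- _ => destruct (Hcf _ _ _ E) as [body [kk [? [? ?]]]]
         end.
  all: try (eexists; split; [econstructor; eauto | simpl in *; lia]).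
  all: try match goal with E : (_, _) = (_, _) |- _ => injection E; intros; subst end.
  all: try match goal with H0 : eval _ _ _ ?e _ _ _ |- context [EIsPair ?e] =>
      eexists; split; [ refine (ev_ispair _ _ _ _ _ _ _ H0) | simpl in *; lia ] end.
  all: try (eexists; split; [econstructor; eauto | simpl in *; lia]).
  all: try discriminate.
Qed.

Lemma run_sound_le P m cf bd e env v kb K : cf_sound P m cf bd ->
  run_e cf bd env e = Some (v, kb) -> (fst kb + snd kb <= K)%nat ->
  exists k, eval P env m e v m k /\ (k <= K)%nat.
Proof.
  intros Hs Hr Hk. destruct (run_sound P m cf bd Hs e env v kb Hr) as [k [H1 H2]].
  exists k; split; [auto|lia].
Qed.

Definition cf_none : nat -> val -> option val := fun _ _ => None.
Definition bd_none : nat -> val -> nat := fun _ _ => 0%nat.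
Lemma cf_none_sound P m : cf_sound P m cf_none bd_none.
Proof. intros f a v H; discriminate. Qed.

Definition val_dec : forall a b : val, {a = b} + {a <> b}.
Proof. decide equality; try apply Req_dec_T; decide equality. Defined.

Definition cb (c : nat) (t : kdtree) : nat := c * tree_size t.
Arguments cb : simpl never.

Lemma cost_node C n s l rt r sp : n <= C -> s <= cb C l + cb C rt -> n + s <= cb C (Node r sp l rt).
Proof. unfold cb; simpl; lia. Qed.
Lemma cost_leaf C n s r : n <= C -> s = 0 -> n + s <= cb C (Leaf r).
Proof. unfold cb; simpl; lia. Qed.

Ltac costs :=
  match goal with |- (fst ?p + snd ?p <= ?R)%nat =>
    let n := eval cbn [fst cadd csuc cmax c1 Nat.max Nat.add] in (fst p) in
    let s := eval cbn [snd cadd csuc cmax c1] in (snd p) in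
    change ((n + s) <= R)%nat;
    first [ apply cost_node; [apply Nat.leb_le; reflexivity | lia]
          | apply cost_leaf; [apply Nat.leb_le; reflexivity | lia] ] end.

Ltac costs_gen :=
  match goal with |- (fst ?p + snd ?p <= ?R)%nat =>
    let n := eval cbn [fst cadd csuc cmax c1 Nat.max Nat.add] in (fst p) in
    let s := eval cbn [snd cadd csuc cmax c1] in (snd p) in
    change ((n + s) <= R)%nat; lia end.

Import ListNotations.
Open Scope nat_scope.


Lemma enc_rect_inj r1 r2 : enc_rect r1 = enc_rect r2 -> r1 = r2.
Proof. destruct r1, r2; simpl; intros H; injection H; intros; subst; reflexivity. Qed.

Lemma enc_tree_inj t1 : forall t2, valid_tree t1 -> valid_tree t2 -> enc_tree t1 = enc_tree t2 -> t1 = t2.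
Proof.
  induction t1 as [r1|r1 sp1 l1 IHl rt1 IHr]; intros t2 V1 V2 H; destruct t2 as [r2|r2 sp2 l2 rt2];
  simpl in H; try discriminate H.
  - f_equal; apply enc_rect_inj; congruence.
  - simpl in V1, V2. destruct V1 as [A1 [B1 [C1 [D1 E1]]]]. destruct V2 as [A2 [B2 [C2 [D2 E2]]]].
    assert (El : enc_tree l1 = enc_tree l2) by congruence.
    assert (Er : enc_tree rt1 = enc_tree rt2) by congruence.
    assert (Erc : enc_rect r1 = enc_rect r2) by congruence.
    assert (Es : enc_seg (split_seg r1 sp1) = enc_seg (split_seg r2 sp2)) by congruence.
    apply enc_rect_inj in Erc; subst r2.
    rewrite (IHl l2 D1 D2 El), (IHr rt2 E1 E2 Er). f_equal.
    destruct sp1, sp2; simpl in Es; injection Es; intros; subst; auto; lra.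
Qed.


Definition x0 := EVar 0.
Definition size_body : Defs.exp :=
  EIf (EFst x0)
    (ENAdd (EConstN 1) (ENAdd (ECall 3 (EFst (ESnd (ESnd (ESnd x0))))) (ECall 3 (ESnd (ESnd (ESnd (ESnd x0)))))))
    (ELet (EROp RAdd (EFst (EFst (ESnd x0))) (EConstR 0)) (EConstN 1)).

Section WithP.
Variable P : program.
Variable m : memory.
Hypothesis HP3 : nth_error P 3 = Some size_body.

Lemma size_ok t : valid_tree t -> exists k, eval P [enc_tree t] m size_body (VNat (tree_size t)) m k /\ (k <= cb 100 t)%nat.
Proof.
  induction t as [r|r sp l IHl rt IHr]; intros V.
  - eapply run_sound_le; [apply cf_none_sound | simpl; reflexivity | costs].
  - assert (V' := V). simpl in V'. destruct V' as [_ [_ [_ [Vl Vr]]]].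
    destruct (IHl Vl) as [kl [El Kl]]. destruct (IHr Vr) as [kr [Er Kr]].
    pose (callf := fun f a => if Nat.eqb f 3 then
         (if val_dec a (enc_tree l) then Some (VNat (tree_size l)) else
          if val_dec a (enc_tree rt) then Some (VNat (tree_size rt)) else None) else None).
    pose (bnd := fun f a => if Nat.eqb f 3 then
         (if val_dec a (enc_tree l) then (cb 100 l) else
          if val_dec a (enc_tree rt) then (cb 100 rt) else 0%nat) else 0%nat).
    assert (Hs : cf_sound P m callf bnd).
    { intros f a v H. unfold callf, bnd in *. destruct (Nat.eqb f 3) eqn:Ef; [|discriminate].
      apply Nat.eqb_eq in Ef; subst f.
      destruct (val_dec a (enc_tree l)); [|destruct (val_dec a (enc_tree rt)); [|discriminate]];
      injection H; intros; subst; eexists; eexists; repeat split; eauto. }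
    assert (Hl : callf 3 (enc_tree l) = Some (VNat (tree_size l)) /\ bnd 3 (enc_tree l) = (cb 100 l)).
    { unfold callf, bnd; simpl; destruct (val_dec (enc_tree l) (enc_tree l)); tauto. }
    assert (Hr : callf 3 (enc_tree rt) = Some (VNat (tree_size rt)) /\ bnd 3 (enc_tree rt) = (cb 100 rt)).
    { unfold callf, bnd; simpl; destruct (val_dec (enc_tree rt) (enc_tree l)) as [e|e].
      - rewrite (enc_tree_inj _ _ Vr Vl e). tauto.
      - destruct (val_dec (enc_tree rt) (enc_tree rt)); tauto. }
    clearbody callf bnd. destruct Hl as [Hl1 Hl2]. destruct Hr as [Hr1 Hr2].
    eapply run_sound_le; [exact Hs | simpl; rewrite Hl1, Hr1, Hl2, Hr2; simpl; reflexivity | costs].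
Qed.
End WithP.

Import ListNotations.
Open Scope nat_scope.

Definition isV (sp : Defs.split) : bool := match sp with VSplit _ => true | HSplit _ => false end.

Fixpoint tab (N : nat) (t : kdtree) : bool -> bool -> bool -> bool -> nat :=
  match t with
  | Leaf _ => fun b1 b2 b3 b4 => if b1 then 0 else if b2 then 0 else if b3 then 0 else if b4 then 0 else N
  | Node _ sp l rt =>
      match sp with
      | VSplit _ => fun b1 b2 b3 b4 =>
          let x := tab N l b1 false b3 b4 + tab N rt false b2 b3 b4 in
          let y := 1 + tab N l b1 true b3 b4 + tab N rt true b2 b3 b4 in x - (x - y)
      | HSplit _ => fun b1 b2 b3 b4 =>
          let x := tab N l b1 b2 b3 false + tab N rt b1 b2 false b4 in
          let y := 1 + tab N l b1 b2 b3 true + tab N rt b1 b2 true b4 in x - (x - y)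
      end
  end.

Definition tbl_enc (f : bool -> bool -> bool -> bool -> nat) : val :=
  let g4 b1 b2 b3 := VPair (VNat (f b1 b2 b3 false)) (VNat (f b1 b2 b3 true)) in
  let g3 b1 b2 := VPair (g4 b1 b2 false) (g4 b1 b2 true) in
  let g2 b1 := VPair (g3 b1 false) (g3 b1 true) in
  VPair (g2 false) (g2 true).

Definition tbl_e (g : bool -> bool -> bool -> bool -> Defs.exp) : Defs.exp :=
  let g4 b1 b2 b3 := EPair (g b1 b2 b3 false) (g b1 b2 b3 true) in
  let g3 b1 b2 := EPair (g4 b1 b2 false) (g4 b1 b2 true) in
  let g2 b1 := EPair (g3 b1 false) (g3 b1 true) in
  EPair (g2 false) (g2 true).

Definition sel (b : bool) (e : Defs.exp) : Defs.exp := if b then ESnd e else EFst e.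
Definition lk_e (e : Defs.exp) b1 b2 b3 b4 : Defs.exp := sel b4 (sel b3 (sel b2 (sel b1 e))).

Fixpoint annrest (N : nat) (t : kdtree) : val :=
  match t with
  | Leaf r => VPair (enc_rect r) (VPair (VBool false) (VNat 0))
  | Node r sp l rt => VPair (enc_rect r) (VPair (VBool true) (VPair (enc_seg (split_seg r sp))
       (VPair (VBool (isV sp)) (VPair (VPair (tbl_enc (tab N l)) (annrest N l))
                                      (VPair (tbl_enc (tab N rt)) (annrest N rt))))))
  end.
Definition annv (N : nat) (t : kdtree) : val := VPair (tbl_enc (tab N t)) (annrest N t).

Definition v0 := EVar 0. Definition v1 := EVar 1. Definition v2 := EVar 2. Definition v3 := EVar 3.
Definition v4 := EVar 4. Definition v5 := EVar 5. Definition v6 := EVar 6.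

Definition entryV (TL TR : Defs.exp) b1 b2 b3 b4 : Defs.exp :=
  let x := ENAdd (lk_e TL b1 false b3 b4) (lk_e TR false b2 b3 b4) in
  let y := ENAdd (ENAdd (EConstN 1) (lk_e TL b1 true b3 b4)) (lk_e TR true b2 b3 b4) in
  ENSub x (ENSub x y).
Definition entryH (TL TR : Defs.exp) b1 b2 b3 b4 : Defs.exp :=
  let x := ENAdd (lk_e TL b1 b2 b3 false) (lk_e TR b1 b2 false b4) in
  let y := ENAdd (ENAdd (EConstN 1) (lk_e TL b1 b2 b3 true)) (lk_e TR b1 b2 true b4) in
  ENSub x (ENSub x y).

Definition dp_leaf : Defs.exp :=
  (* env: x:0, a:1 *)
  ELet (EROp RAdd (EFst (EFst (ESnd v0))) (EConstR 0))
  (* dummy:0, x:1, a:2 *)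
  (EPair (tbl_e (fun b1 b2 b3 b4 => if b1 then EConstN 0 else if b2 then EConstN 0 else
                   if b3 then EConstN 0 else if b4 then EConstN 0 else EFst v2))
         (EPair (ESnd v1) (EPair (EBool false) (EConstN 0)))).

Definition dp_node : Defs.exp :=
  (* env: x:0, a:1 *)
  ELet (ESnd v0)
  (* p:0, x:1, a:2 *)
  (ELet (ECall 1 (EPair (EFst v2) (EFst (ESnd (ESnd v0)))))
  (* Al:0, p:1, x:2, a:3 *)
  (ELet (ECall 1 (EPair (EFst v3) (ESnd (ESnd (ESnd v1)))))
  (* Ar:0, Al:1, p:2, x:3, a:4 *)
  (ELet (EFst (ESnd v2))
  (* seg:0, Ar:1, Al:2, p:3 *)
  (ELet (ERCmp CEq (EFst (EFst v0)) (EFst (ESnd v0)))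
  (* d:0, seg:1, Ar:2, Al:3, p:4 *)
  (ELet (EFst v3)
  (* TL:0, d:1, seg:2, Ar:3, Al:4, p:5 *)
  (ELet (EFst v3)
  (* TR:0, TL:1, d:2, seg:3, Ar:4, Al:5, p:6 *)
  (EPair (tbl_e (fun b1 b2 b3 b4 => EIf v2 (entryV v1 v0 b1 b2 b3 b4) (entryH v1 v0 b1 b2 b3 b4)))
     (EPair (EFst v6) (EPair (EBool true) (EPair v3 (EPair v2 (EPair v5 v4)))))))))))).

Definition dp_body : Defs.exp := ELet (ESnd v0) (EIf (EFst v0) dp_node dp_leaf).

Section WithP.
Variable P : program.
Variable m : memory.
Hypothesis HP1 : nth_error P 1 = Some dp_body.

Lemma dp_ok t : valid_tree t -> forall N, exists k,
   eval P [VPair (VNat N) (enc_tree t)] m dp_body (annv N t) m k /\ (k <= cb 3000 t)%nat.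
Proof.
  induction t as [r|r sp l IHl rt IHr]; intros V N.
  - eapply run_sound_le; [apply cf_none_sound | simpl; reflexivity | costs].
  - assert (V' := V). simpl in V'. destruct V' as [Vx [Vy [Vs [Vl Vr]]]].
    destruct (IHl Vl N) as [kl [El Kl]]. destruct (IHr Vr N) as [kr [Er Kr]].
    pose (al := VPair (VNat N) (enc_tree l)). pose (ar := VPair (VNat N) (enc_tree rt)).
    pose (callf := fun f a => if Nat.eqb f 1 then
         (if val_dec a al then Some (annv N l) else
          if val_dec a ar then Some (annv N rt) else None) else None).
    pose (bnd := fun f a => if Nat.eqb f 1 then
         (if val_dec a al then (cb 3000 l) else
          if val_dec a ar then (cb 3000 rt) else 0%nat) else 0%nat).
    assert (Hs : cf_sound P m callf bnd).
    { intros f a v H. unfold callf, bnd in *. destruct (Nat.eqb f 1) eqn:Ef; [|discriminate].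
      apply Nat.eqb_eq in Ef; subst f.
      destruct (val_dec a al); [|destruct (val_dec a ar); [|discriminate]];
      injection H; intros; subst; eexists; eexists; repeat split; eauto. }
    assert (Hl : forall a, a = al -> callf 1 a = Some (annv N l) /\ bnd 1 a = (cb 3000 l)).
    { intros a ->; unfold callf, bnd; cbn [Nat.eqb]; destruct (val_dec al al); tauto. }
    assert (Hr : forall a, a = ar -> callf 1 a = Some (annv N rt) /\ bnd 1 a = (cb 3000 rt)).
    { intros a ->; unfold callf, bnd; cbn [Nat.eqb]; destruct (val_dec ar al) as [e|e].
      - assert (enc_tree rt = enc_tree l) by (unfold al, ar in e; congruence).
        rewrite (enc_tree_inj _ _ Vr Vl H). tauto.
      - destruct (val_dec ar ar); tauto. }
    clearbody callf bnd.
    destruct (Hl al eq_refl) as [Hl1 Hl2]. destruct (Hr ar eq_refl) as [Hr1 Hr2].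
    unfold al, ar in *.
    eapply run_sound_le; [exact Hs | | ].
    + simpl. rewrite Hl1, Hl2. simpl. rewrite Hr1, Hr2. simpl.
      match goal with |- Some (_, ?K) = Some (_, ?e) => unify e K end.
      destruct sp as [a|b]; simpl in Vs.
      * match goal with |- context [Req_dec_T ?x ?y] => destruct (Req_dec_T x y) as [_|Hne]; [|exfalso; apply Hne; reflexivity] end.
        cbn -[tab]. reflexivity.
      * match goal with |- context [Req_dec_T ?x ?y] => destruct (Req_dec_T x y) as [Heq|_]; [simpl in Heq; lra|] end.
        cbn -[tab]. reflexivity.
    + costs.
Qed.
End WithP.

Import ListNotations.
Open Scope nat_scope.

Definition rlkf (f : bool -> bool -> bool -> bool -> nat) (b1 b2 b3 b4 : bool) : nat :=
  let r1 c1 c2 c3 := if b4 then f c1 c2 c3 true else f c1 c2 c3 false in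
  let r2 c1 c2 := if b3 then r1 c1 c2 true else r1 c1 c2 false in
  let r3 c1 := if b2 then r2 c1 true else r2 c1 false in
  if b1 then r3 true else r3 false.

Lemma rlkf_eq f b1 b2 b3 b4 : rlkf f b1 b2 b3 b4 = f b1 b2 b3 b4.
Proof. destruct b1, b2, b3, b4; reflexivity. Qed.

Fixpoint reconv (N : nat) (t : kdtree) (b1 b2 b3 b4 : bool) (acc : val) : val :=
  match t with
  | Leaf _ => acc
  | Node r sp l rt =>
      let s := enc_seg (split_seg r sp) in
      match sp with
      | VSplit _ =>
          let X := rlkf (tab N l) b1 false b3 b4 + rlkf (tab N rt) false b2 b3 b4 in
          let Y := 1 + rlkf (tab N l) b1 true b3 b4 + rlkf (tab N rt) true b2 b3 b4 in
          let c := Nat.ltb Y X in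
          reconv N rt c b2 b3 b4 (reconv N l b1 c b3 b4 (vif c (VPair s acc) acc))
      | HSplit _ =>
          let X := rlkf (tab N l) b1 b2 b3 false + rlkf (tab N rt) b1 b2 false b4 in
          let Y := 1 + rlkf (tab N l) b1 b2 b3 true + rlkf (tab N rt) b1 b2 true b4 in
          let c := Nat.ltb Y X in
          reconv N rt b1 b2 c b4 (reconv N l b1 b2 b3 c (vif c (VPair s acc) acc))
      end
  end.

Definition stv (b1 b2 b3 b4 : bool) : val := VPair (VBool b1) (VPair (VBool b2) (VPair (VBool b3) (VBool b4))).

Definition rlk_e (T B1 B2 B3 B4 : Defs.exp) : Defs.exp :=
  let r1 T := EIf B4 (ESnd T) (EFst T) in
  let r2 T := EIf B3 (r1 (ESnd T)) (r1 (EFst T)) in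
  let r3 T := EIf B2 (r2 (ESnd T)) (r2 (EFst T)) in
  EIf B1 (r3 (ESnd T)) (r3 (EFst T)).

Definition B1 (s : Defs.exp) := EFst s.
Definition B2 (s : Defs.exp) := EFst (ESnd s).
Definition B3 (s : Defs.exp) := EFst (ESnd (ESnd s)).
Definition B4 (s : Defs.exp) := ESnd (ESnd (ESnd s)).
Definition eF := EBool false. Definition eT := EBool true.

Definition rec_leaf : Defs.exp := ELet (ENAdd (ESnd v0) (EConstN 0)) (ESnd (ESnd v3)).

Definition rec_node : Defs.exp :=
 ELet (ESnd v0) (* w:0, q:1, A:2, arg:3 *)
 (ELet (EFst (ESnd v3)) (* st:0, w:1, q:2, A:3, arg:4 *)
 (ELet (ESnd (ESnd v4)) (* acc:0, st:1, w:2 *)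
 (ELet (EFst (ESnd v2)) (* dV:0, acc:1, st:2, w:3 *)
 (ELet (EFst (EFst (ESnd (ESnd v3)))) (* TL:0, dV:1, acc:2, st:3, w:4 *)
 (ELet (EFst (ESnd (ESnd (ESnd v4)))) (* TR:0, TL:1, dV:2, acc:3, st:4, w:5 *)
 (ELet (EIf v2 (ENAdd (rlk_e v1 (B1 v4) eF (B3 v4) (B4 v4)) (rlk_e v0 eF (B2 v4) (B3 v4) (B4 v4)))
              (ENAdd (rlk_e v1 (B1 v4) (B2 v4) (B3 v4) eF) (rlk_e v0 (B1 v4) (B2 v4) eF (B4 v4))))
 (* X:0, TR:1, TL:2, dV:3, acc:4, st:5, w:6 *)
 (ELet (EIf v3 (ENAdd (ENAdd (EConstN 1) (rlk_e v2 (B1 v5) eT (B3 v5) (B4 v5))) (rlk_e v1 eT (B2 v5) (B3 v5) (B4 v5)))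
              (ENAdd (ENAdd (EConstN 1) (rlk_e v2 (B1 v5) (B2 v5) (B3 v5) eT)) (rlk_e v1 (B1 v5) (B2 v5) eT (B4 v5))))
 (* Y:0, X:1, TR:2, TL:3, dV:4, acc:5, st:6, w:7 *)
 (ELet (ENCmp CLt v0 v1)
 (* c:0, Y:1, X:2, TR:3, TL:4, dV:5, acc:6, st:7, w:8 *)
 (ELet (EIf v0 (EPair (EFst (EVar 8)) v6) v6)
 (* acc1:0, c:1, Y:2, X:3, TR:4, TL:5, dV:6, acc:7, st:8, w:9 *)
 (ELet (EIf v6 (EPair (B1 (EVar 8)) (EPair v1 (EPair (B3 (EVar 8)) (B4 (EVar 8)))))
              (EPair (B1 (EVar 8)) (EPair (B2 (EVar 8)) (EPair (B3 (EVar 8)) v1))))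
 (* stL:0, acc1:1, c:2, Y:3, X:4, TR:5, TL:6, dV:7, acc:8, st:9, w:10 *)
 (ELet (EIf (EVar 7) (EPair v2 (EPair (B2 (EVar 9)) (EPair (B3 (EVar 9)) (B4 (EVar 9)))))
              (EPair (B1 (EVar 9)) (EPair (B2 (EVar 9)) (EPair v2 (B4 (EVar 9))))))
 (* stR:0, stL:1, acc1:2, c:3, Y:4, X:5, TR:6, TL:7, dV:8, acc:9, st:10, w:11 *)
 (ELet (ECall 2 (EPair (EFst (ESnd (ESnd (EVar 11)))) (EPair v1 v2)))
 (* accL:0, stR:1, ..., w:12 *)
 (ECall 2 (EPair (ESnd (ESnd (ESnd (EVar 12)))) (EPair v1 v0))))))))))))))).

Definition rec_body : Defs.exp :=
  ELet (EFst v0) (ELet (ESnd (ESnd v0)) (EIf (EFst v0) rec_node rec_leaf)).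

Lemma annrest_inj N t1 : forall t2, valid_tree t1 -> valid_tree t2 -> annrest N t1 = annrest N t2 -> t1 = t2.
Proof.
  induction t1 as [r1|r1 sp1 l1 IHl rt1 IHr]; intros t2 V1 V2 H; destruct t2 as [r2|r2 sp2 l2 rt2];
  simpl in H; try discriminate H.
  - f_equal; apply enc_rect_inj; congruence.
  - simpl in V1, V2. destruct V1 as [A1 [B1' [C1 [D1 E1]]]]. destruct V2 as [A2 [B2' [C2 [D2 E2]]]].
    assert (El : annrest N l1 = annrest N l2) by congruence.
    assert (Er : annrest N rt1 = annrest N rt2) by congruence.
    assert (Erc : enc_rect r1 = enc_rect r2) by congruence.
    assert (Es : enc_seg (split_seg r1 sp1) = enc_seg (split_seg r2 sp2)) by congruence.
    apply enc_rect_inj in Erc; subst r2.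
    rewrite (IHl l2 D1 D2 El), (IHr rt2 E1 E2 Er). f_equal.
    destruct sp1, sp2; simpl in Es; injection Es; intros; subst; auto; lra.
Qed.

Lemma annv_inj N t1 t2 : valid_tree t1 -> valid_tree t2 -> annv N t1 = annv N t2 -> t1 = t2.
Proof. intros V1 V2 H. apply (annrest_inj N); auto. unfold annv in H; congruence. Qed.

Definition rgate (N : nat) (t : kdtree) (a : val) : Prop :=
  match a with
  | VPair A (VPair (VPair (VBool _) (VPair (VBool _) (VPair (VBool _) (VBool _)))) _) => A = annv N t
  | _ => False end.
Definition rres (N : nat) (t : kdtree) (a : val) : val :=
  match a with
  | VPair A (VPair (VPair (VBool c1) (VPair (VBool c2) (VPair (VBool c3) (VBool c4)))) acc) =>
      reconv N t c1 c2 c3 c4 acc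
  | _ => VUnit end.

Section WithP.
Variable P : program.
Variable m : memory.
Hypothesis HP2 : nth_error P 2 = Some rec_body.

Lemma rec_ok t : valid_tree t -> forall N b1 b2 b3 b4 acc, exists k,
   eval P [VPair (annv N t) (VPair (stv b1 b2 b3 b4) acc)] m rec_body (reconv N t b1 b2 b3 b4 acc) m k
   /\ (k <= cb 3000 t)%nat.
Proof.
  induction t as [r|r sp l IHl rt IHr]; intros V N b1 b2 b3 b4 acc.
  - eapply run_sound_le; [apply cf_none_sound | simpl; reflexivity | costs].
  - assert (V' := V). simpl in V'. destruct V' as [Vx [Vy [Vs [Vl Vr]]]].
    pose (callf := fun f a => if Nat.eqb f 2 then
         match a with
         | VPair A (VPair (VPair (VBool _) (VPair (VBool _) (VPair (VBool _) (VBool _)))) _) =>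
             if val_dec A (annv N l) then Some (rres N l a) else
             if val_dec A (annv N rt) then Some (rres N rt a) else None
         | _ => None end else None).
    pose (bnd := fun f a => if Nat.eqb f 2 then
         match a with
         | VPair A _ => 
             if val_dec A (annv N l) then (cb 3000 l) else
             if val_dec A (annv N rt) then (cb 3000 rt) else 0%nat
         | _ => 0%nat end else 0%nat).
    assert (Hs : cf_sound P m callf bnd).
    { intros f a v H. unfold callf, bnd in *. destruct (Nat.eqb f 2) eqn:Ef; [|discriminate].
      apply Nat.eqb_eq in Ef; subst f.
      destruct a as [| | | |A a']; try discriminate.
      destruct a' as [| | | |st acc']; try discriminate.
      destruct st as [| | | |s1 st]; try discriminate. destruct s1 as [| c1 | | |]; try discriminate.
      destruct st as [| | | |s2 st]; try discriminate. destruct s2 as [| c2 | | |]; try discriminate.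
      destruct st as [| | | |s3 s4]; try discriminate. destruct s3 as [| c3 | | |]; try discriminate.
      destruct s4 as [| c4 | | |]; try discriminate.
      destruct (val_dec A (annv N l)); [|destruct (val_dec A (annv N rt)); [|discriminate]];
      injection H; intros; subst; simpl;
      [destruct (IHl Vl N c1 c2 c3 c4 acc') as [kk [E K]] | destruct (IHr Vr N c1 c2 c3 c4 acc') as [kk [E K]]];
      eexists; eexists; repeat split; eauto. }
    assert (Hl : forall a, rgate N l a -> callf 2 a = Some (rres N l a) /\ bnd 2 a = (cb 3000 l)).
    { intros a G. unfold callf, bnd; cbn [Nat.eqb].
      destruct a as [| | | |A a']; try contradiction.
      destruct a' as [| | | |st acc']; try contradiction.
      destruct st as [| | | |s1 st]; try contradiction. destruct s1; try contradiction.
      destruct st as [| | | |s2 st]; try contradiction. destruct s2; try contradiction.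
      destruct st as [| | | |s3 s4]; try contradiction. destruct s3; try contradiction.
      destruct s4; try contradiction. simpl in G. subst A.
      destruct (val_dec (annv N l) (annv N l)); tauto. }
    assert (Hr : forall a, rgate N rt a -> callf 2 a = Some (rres N rt a) /\ bnd 2 a = (cb 3000 rt)).
    { intros a G. unfold callf, bnd; cbn [Nat.eqb].
      destruct a as [| | | |A a']; try contradiction.
      destruct a' as [| | | |st acc']; try contradiction.
      destruct st as [| | | |s1 st]; try contradiction. destruct s1; try contradiction.
      destruct st as [| | | |s2 st]; try contradiction. destruct s2; try contradiction.
      destruct st as [| | | |s3 s4]; try contradiction. destruct s3; try contradiction.
      destruct s4; try contradiction. simpl in G. subst A.
      destruct (val_dec (annv N rt) (annv N l)) as [e|e].
      - rewrite (annv_inj N _ _ Vr Vl e). tauto.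
      - destruct (val_dec (annv N rt) (annv N rt)); tauto. }
    clearbody callf bnd.
    eapply run_sound_le; [exact Hs | | ].
    + simpl.
      match goal with |- context [callf 2 ?a] =>
        first [ destruct (Hl a ltac:(simpl; reflexivity)) as [H1 H2] | destruct (Hr a ltac:(simpl; reflexivity)) as [H1 H2] ];
        rewrite H1, H2 end.
      simpl.
      match goal with |- context [callf 2 ?a] =>
        first [ destruct (Hr a ltac:(simpl; reflexivity)) as [H3 H4] | destruct (Hl a ltac:(simpl; reflexivity)) as [H3 H4] ];
        rewrite H3, H4 end.
      simpl.
      match goal with |- Some (_, ?K) = Some (_, ?e) => unify e K end.
      destruct sp as [a|b]; reflexivity.
    + costs.
Qed.
End WithP.

Import ListNotations.
Open Scope nat_scope.

Definition xl_e (r : Defs.exp) := EFst (EFst r).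
Definition xh_e (r : Defs.exp) := ESnd (EFst r).
Definition yl_e (r : Defs.exp) := EFst (ESnd r).
Definition yh_e (r : Defs.exp) := ESnd (ESnd r).
Definition eL_e r := EPair (EPair (xl_e r) (yl_e r)) (EPair (xl_e r) (yh_e r)).
Definition eR_e r := EPair (EPair (xh_e r) (yl_e r)) (EPair (xh_e r) (yh_e r)).
Definition eB_e r := EPair (EPair (xl_e r) (yl_e r)) (EPair (xh_e r) (yl_e r)).
Definition eT_e r := EPair (EPair (xl_e r) (yh_e r)) (EPair (xh_e r) (yh_e r)).

Definition finish_body : Defs.exp :=
 ELet (EFst v0) (* A:0, a:1 *)
 (ELet (ESnd (ESnd v1)) (* st:0, A:1, a:2 *)
 (ELet (EFst (ESnd v1)) (* r:0, st:1, A:2 *)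
 (ELet (EIf (B1 v1) (EPair (eL_e v0) EUnit) EUnit) (* acc1:0, r:1, st:2, A:3 *)
 (ELet (EIf (B2 v2) (EPair (eR_e v1) v0) v0) (* acc2:0, acc1:1, r:2, st:3, A:4 *)
 (ELet (EIf (B3 v3) (EPair (eB_e v2) v0) v0) (* acc3:0, acc2:1, acc1:2, r:3, st:4, A:5 *)
 (ELet (EIf (B4 v4) (EPair (eT_e v3) v0) v0) (* acc4:0, .., r:4, st:5, A:6 *)
 (ECall 2 (EPair v6 (EPair v5 v0))))))))).

Definition edgeL (r : rect) : seg := ((rxl r, ryl r), (rxl r, ryh r)).
Definition edgeR (r : rect) : seg := ((rxh r, ryl r), (rxh r, ryh r)).
Definition edgeB (r : rect) : seg := ((rxl r, ryl r), (rxh r, ryl r)).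
Definition edgeT (r : rect) : seg := ((rxl r, ryh r), (rxh r, ryh r)).

Definition accv (r : rect) (b1 b2 b3 b4 : bool) : val :=
  let a1 := vif b1 (VPair (enc_seg (edgeL r)) VUnit) VUnit in
  let a2 := vif b2 (VPair (enc_seg (edgeR r)) a1) a1 in
  let a3 := vif b3 (VPair (enc_seg (edgeB r)) a2) a2 in
  vif b4 (VPair (enc_seg (edgeT r)) a3) a3.

Definition fgate (N : nat) (t : kdtree) (a : val) : Prop :=
  match a with
  | VPair A (VPair (VNat _) (VPair (VBool _) (VPair (VBool _) (VPair (VBool _) (VBool _))))) => A = annv N t
  | _ => False end.
Definition fres (N : nat) (t : kdtree) (a : val) : val :=
  match a with
  | VPair A (VPair (VNat _) (VPair (VBool c1) (VPair (VBool c2) (VPair (VBool c3) (VBool c4))))) =>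
      reconv N t c1 c2 c3 c4 (accv (root_rect t) c1 c2 c3 c4)
  | _ => VUnit end.

Section WithP.
Variable P : program.
Variable m : memory.
Hypothesis HP2 : nth_error P 2 = Some rec_body.
Hypothesis HP5 : nth_error P 5 = Some finish_body.

Lemma finish_ok t : valid_tree t -> forall N v b1 b2 b3 b4, exists k,
   eval P [VPair (annv N t) (VPair (VNat v) (stv b1 b2 b3 b4))] m finish_body
        (reconv N t b1 b2 b3 b4 (accv (root_rect t) b1 b2 b3 b4)) m k
   /\ (k <= cb 3000 t + 200)%nat.
Proof.
  intros V N v b1 b2 b3 b4.
  pose (callf := fun f a => if Nat.eqb f 2 then
         match a with
         | VPair A (VPair (VPair (VBool _) (VPair (VBool _) (VPair (VBool _) (VBool _)))) _) =>
             if val_dec A (annv N t) then Some (rres N t a) else None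
         | _ => None end else None).
  pose (bnd := fun (f : nat) (a : val) => cb 3000 t).
  assert (Hs : cf_sound P m callf bnd).
  { intros f a w H. unfold callf, bnd in *. destruct (Nat.eqb f 2) eqn:Ef; [|discriminate].
    apply Nat.eqb_eq in Ef; subst f.
    destruct a as [| | | |A a']; try discriminate.
    destruct a' as [| | | |st acc']; try discriminate.
    destruct st as [| | | |s1 st]; try discriminate. destruct s1 as [| c1 | | |]; try discriminate.
    destruct st as [| | | |s2 st]; try discriminate. destruct s2 as [| c2 | | |]; try discriminate.
    destruct st as [| | | |s3 s4]; try discriminate. destruct s3 as [| c3 | | |]; try discriminate.
    destruct s4 as [| c4 | | |]; try discriminate.
    destruct (val_dec A (annv N t)); [|discriminate].
    injection H; intros; subst; simpl.
    destruct (rec_ok P m HP2 t V N c1 c2 c3 c4 acc') as [kk [E K]].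
    eexists; eexists; repeat split; eauto. }
  assert (Hl : forall a, rgate N t a -> callf 2 a = Some (rres N t a)).
  { intros a G. unfold callf; cbn [Nat.eqb].
    destruct a as [| | | |A a']; try contradiction.
    destruct a' as [| | | |st acc']; try contradiction.
    destruct st as [| | | |s1 st]; try contradiction. destruct s1; try contradiction.
    destruct st as [| | | |s2 st]; try contradiction. destruct s2; try contradiction.
    destruct st as [| | | |s3 s4]; try contradiction. destruct s3; try contradiction.
    destruct s4; try contradiction. simpl in G. subst A.
    destruct (val_dec (annv N t) (annv N t)); tauto. }
  clearbody callf. 
  eapply run_sound_le; [exact Hs | | ].
  + destruct t; simpl;
    (match goal with |- context [callf 2 ?a] => let aa := fresh "aa" in set (aa := a);
       let G := fresh "G" in assert (G : rgate N _ aa) by (unfold aa; simpl; reflexivity);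
       rewrite (Hl aa G); unfold aa; clear aa G end);
    unfold bnd; simpl; reflexivity.
  + (unfold bnd; costs_gen).
Qed.
End WithP.

Definition cnt4 (b1 b2 b3 b4 : bool) : nat := Nat.b2n b1 + Nat.b2n b2 + Nat.b2n b3 + Nat.b2n b4.

Definition cand_e (b1 b2 b3 b4 : bool) : Defs.exp :=
  EPair (if orb b1 (orb b2 (orb b3 b4)) then ENAdd (EConstN (cnt4 b1 b2 b3 b4)) (lk_e v0 b1 b2 b3 b4) else v2)
        (EPair (EBool b1) (EPair (EBool b2) (EPair (EBool b3) (EBool b4)))).
Definition candv (N : nat) (f : bool -> bool -> bool -> bool -> nat) (b1 b2 b3 b4 : bool) : val :=
  VPair (VNat (if orb b1 (orb b2 (orb b3 b4)) then cnt4 b1 b2 b3 b4 + f b1 b2 b3 b4 else N)) (stv b1 b2 b3 b4).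

Definition pick_e (e1 e2 : Defs.exp) : Defs.exp := EIf (ENCmp CLt (EFst e2) (EFst e1)) e2 e1.
Definition fstn (v : val) : nat := match v with VPair (VNat x) _ => x | _ => 0 end.
Definition pickv (a b : val) : val := vif (Nat.ltb (fstn b) (fstn a)) b a.

Definition tour_e (g : bool -> bool -> bool -> bool -> Defs.exp) : Defs.exp :=
  let p4 b1 b2 b3 := pick_e (g b1 b2 b3 false) (g b1 b2 b3 true) in
  let p3 b1 b2 := pick_e (p4 b1 b2 false) (p4 b1 b2 true) in
  let p2 b1 := pick_e (p3 b1 false) (p3 b1 true) in
  pick_e (p2 false) (p2 true).
Definition tourv (g : bool -> bool -> bool -> bool -> val) : val :=
  let p4 b1 b2 b3 := pickv (g b1 b2 b3 false) (g b1 b2 b3 true) in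
  let p3 b1 b2 := pickv (p4 b1 b2 false) (p4 b1 b2 true) in
  let p2 b1 := pickv (p3 b1 false) (p3 b1 true) in
  pickv (p2 false) (p2 true).

Definition main_body : Defs.exp :=
 ELet (ECall 3 v0) (* n:0, x:1 *)
 (ELet (ENAdd v0 (EConstN 5)) (* N:0, n:1, x:2 *)
 (ELet (ECall 1 (EPair v0 v2)) (* A:0, N:1, n:2, x:3 *)
 (ELet (EFst v0) (* T:0, A:1, N:2 *)
 (ECall 5 (EPair v1 (tour_e cand_e)))))).

Definition NN (t : kdtree) : nat := tree_size t + 5.
Definition bestv (t : kdtree) : val := tourv (candv (NN t) (tab (NN t) t)).
Definition finalv (t : kdtree) : val := fres (NN t) t (VPair (annv (NN t) t) (bestv t)).

Lemma tree_size_pos t : 1 <= tree_size t.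
Proof. destruct t; simpl; lia. Qed.

Lemma cost_main n s t : n <= 4000 -> s <= cb 100 t + cb 3000 t + (cb 3000 t + 200) -> n + s <= cb 100 t + cb 3000 t + cb 3000 t + 4200.
Proof. intros. lia. Qed.

Section WithP2.
Variable P : program.
Variable m : memory.
Hypothesis HP1 : nth_error P 1 = Some dp_body.
Hypothesis HP2 : nth_error P 2 = Some rec_body.
Hypothesis HP3 : nth_error P 3 = Some size_body.
Hypothesis HP5 : nth_error P 5 = Some finish_body.

Lemma main_ok t : valid_tree t -> exists k,
   eval P [enc_tree t] m main_body (finalv t) m k /\ (k <= cb 100 t + cb 3000 t + cb 3000 t + 4200)%nat.
Proof.
  intros V.
  pose (callf := fun f a =>
    if Nat.eqb f 3 then (if val_dec a (enc_tree t) then Some (VNat (tree_size t)) else None) else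
    if Nat.eqb f 1 then (if val_dec a (VPair (VNat (NN t)) (enc_tree t)) then Some (annv (NN t) t) else None) else
    if Nat.eqb f 5 then
      (match a with
       | VPair A (VPair (VNat _) (VPair (VBool _) (VPair (VBool _) (VPair (VBool _) (VBool _))))) =>
           if val_dec A (annv (NN t) t) then Some (fres (NN t) t a) else None
       | _ => None end) else None).
  pose (bnd := fun (f : nat) (a : val) =>
    if Nat.eqb f 3 then cb 100 t else if Nat.eqb f 1 then cb 3000 t else cb 3000 t + 200).
  assert (Hs : cf_sound P m callf bnd).
  { intros f a w H. unfold callf, bnd in *.
    destruct (Nat.eqb f 3) eqn:E3.
    { apply Nat.eqb_eq in E3; subst f. destruct (val_dec a (enc_tree t)); [|discriminate].
      injection H; intros; subst. destruct (size_ok P m HP3 t V) as [kk [E K]].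
      eexists; eexists; repeat split; eauto. }
    destruct (Nat.eqb f 1) eqn:E1.
    { apply Nat.eqb_eq in E1; subst f. destruct (val_dec a _); [|discriminate].
      injection H; intros; subst. destruct (dp_ok P m HP1 t V (NN t)) as [kk [E K]].
      eexists; eexists; repeat split; eauto. }
    destruct (Nat.eqb f 5) eqn:E5; [|discriminate].
    apply Nat.eqb_eq in E5; subst f.
    destruct a as [| | | |A a']; try discriminate.
    destruct a' as [| | | |vv st]; try discriminate. destruct vv as [| | |nv|]; try discriminate.
    destruct st as [| | | |s1 st]; try discriminate. destruct s1 as [| c1 | | |]; try discriminate.
    destruct st as [| | | |s2 st]; try discriminate. destruct s2 as [| c2 | | |]; try discriminate.
    destruct st as [| | | |s3 s4]; try discriminate. destruct s3 as [| c3 | | |]; try discriminate.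
    destruct s4 as [| c4 | | |]; try discriminate.
    destruct (val_dec A (annv (NN t) t)); [|discriminate].
    injection H; intros; subst; simpl.
    destruct (finish_ok P m HP2 t V (NN t) nv c1 c2 c3 c4) as [kk [E K]].
    eexists; eexists; repeat split; eauto. }
  assert (H3 : forall a, a = enc_tree t -> callf 3 a = Some (VNat (tree_size t))).
  { intros a ->. unfold callf. cbn [Nat.eqb]. destruct (val_dec _ _); tauto. }
  assert (H1 : forall a, a = VPair (VNat (NN t)) (enc_tree t) -> callf 1 a = Some (annv (NN t) t)).
  { intros a ->. unfold callf. cbn [Nat.eqb]. destruct (val_dec _ _); tauto. }
  assert (H5 : forall a, fgate (NN t) t a -> callf 5 a = Some (fres (NN t) t a)).
  { intros a G. unfold callf; cbn [Nat.eqb].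
    destruct a as [| | | |A a']; try contradiction.
    destruct a' as [| | | |vv st]; try contradiction. destruct vv; try contradiction.
    destruct st as [| | | |s1 st]; try contradiction. destruct s1; try contradiction.
    destruct st as [| | | |s2 st]; try contradiction. destruct s2; try contradiction.
    destruct st as [| | | |s3 s4]; try contradiction. destruct s3; try contradiction.
    destruct s4; try contradiction. simpl in G. subst A.
    destruct (val_dec _ _); tauto. }
  clearbody callf.
  eapply run_sound_le; [exact Hs | | ].
  + simpl.
    match goal with |- context [callf 3 ?a] => let aa := fresh "aa" in set (aa := a);
       rewrite (H3 aa eq_refl); unfold aa; clear aa end.
    simpl.
    match goal with |- context [callf 1 ?a] => let aa := fresh "aa" in set (aa := a);
       rewrite (H1 aa eq_refl); unfold aa; clear aa end.
    simpl.
    match goal with |- context [callf 5 ?a] => let aa := fresh "aa" in set (aa := a);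
       let G := fresh "G" in assert (G : fgate (NN t) t aa) by (unfold aa; simpl; reflexivity);
       rewrite (H5 aa G); clear G end.
    (unfold bnd; cbn [Nat.eqb]).
    match goal with |- Some (_, ?K) = Some (_, ?e) => unify e K end.
    reflexivity.
  + unfold bnd; cbn [Nat.eqb].
    match goal with |- (fst ?p + snd ?p <= ?R)%nat =>
      let n := eval cbn [fst cadd csuc cmax c1 Nat.max Nat.add] in (fst p) in
      let s := eval cbn [snd cadd csuc cmax c1] in (snd p) in
      change ((n + s) <= R)%nat end.
    apply cost_main; [apply Nat.leb_le; reflexivity | lia].
Qed.
End WithP2.

Import ListNotations.
Open Scope nat_scope.

Fixpoint reconL (N : nat) (t : kdtree) (b1 b2 b3 b4 : bool) : list seg :=
  match t with
  | Leaf _ => []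
  | Node r sp l rt =>
      let s := split_seg r sp in
      match sp with
      | VSplit _ =>
          let X := tab N l b1 false b3 b4 + tab N rt false b2 b3 b4 in
          let Y := 1 + tab N l b1 true b3 b4 + tab N rt true b2 b3 b4 in
          let c := Nat.ltb Y X in
          reconL N rt c b2 b3 b4 ++ reconL N l b1 c b3 b4 ++ (if c then [s] else [])
      | HSplit _ =>
          let X := tab N l b1 b2 b3 false + tab N rt b1 b2 false b4 in
          let Y := 1 + tab N l b1 b2 b3 true + tab N rt b1 b2 true b4 in
          let c := Nat.ltb Y X in
          reconL N rt b1 b2 c b4 ++ reconL N l b1 b2 b3 c ++ (if c then [s] else [])
      end
  end.


Lemma vif_acc c s L : vif c (VPair (enc_seg s) (enc_segs L)) (enc_segs L) = enc_segs ((if c then [s] else []) ++ L).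
Proof. rewrite vif_spec; destruct c; reflexivity. Qed.

Lemma reconv_eq N t : forall b1 b2 b3 b4 L,
  reconv N t b1 b2 b3 b4 (enc_segs L) = enc_segs (reconL N t b1 b2 b3 b4 ++ L).
Proof.
  induction t as [r|r sp l IHl rt IHr]; intros b1 b2 b3 b4 L; [reflexivity|].
  destruct sp; cbn [reconv reconL]; rewrite !rlkf_eq, vif_acc, IHl, IHr, !app_assoc; reflexivity.
Qed.

Definition ctx4 := (seg * seg * seg * seg)%type.
Definition comps (cx : ctx4) : list seg := let '(L, R, B, T) := cx in [L; R; B; T].
Definition chosen (cx : ctx4) (b1 b2 b3 b4 : bool) : list seg :=
  let '(L, R, B, T) := cx in
  (if b1 then [L] else []) ++ (if b2 then [R] else []) ++ (if b3 then [B] else []) ++ (if b4 then [T] else []).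

Fixpoint leafctx (t : kdtree) (cx : ctx4) : list (rect * ctx4) :=
  match t with
  | Leaf r => [(r, cx)]
  | Node r sp l rt =>
      let '(L, R, B, T) := cx in
      let s := split_seg r sp in
      match sp with
      | VSplit _ => leafctx l (L, s, B, T) ++ leafctx rt (s, R, B, T)
      | HSplit _ => leafctx l (L, R, B, s) ++ leafctx rt (L, R, s, T)
      end
  end.

Lemma leafctx_cells t : forall cx, map fst (leafctx t cx) = cells t.
Proof.
  induction t as [r|r sp l IHl rt IHr]; intros [[[L R] B] T]; [reflexivity|].
  destruct sp; simpl; rewrite map_app, IHl, IHr; reflexivity.
Qed.

Lemma leafctx_comps t : forall cx c cxc, In (c, cxc) (leafctx t cx) ->
  forall s, In s (comps cxc) -> In s (comps cx) \/ In s (split_segs t).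
Proof.
  induction t as [r|r sp l IHl rt IHr]; intros [[[L R] B] T] c cxc H s Hs.
  - simpl in H. destruct H as [H|[]]. injection H; intros; subst. auto.
  - destruct sp; simpl in H; apply in_app_or in H; destruct H as [H|H];
    [destruct (IHl _ _ _ H s Hs) as [H'|H'] | destruct (IHr _ _ _ H s Hs) as [H'|H']
    | destruct (IHl _ _ _ H s Hs) as [H'|H'] | destruct (IHr _ _ _ H s Hs) as [H'|H']];
    simpl in H' |- *; intuition (subst; auto using in_or_app).
Qed.

Definition seg_dec : forall a b : seg, {a = b} + {a <> b}.
Proof.
  intros [[a1 a2] [a3 a4]] [[b1 b2] [b3 b4]].
  destruct (Req_dec_T a1 b1); [|right; congruence].
  destruct (Req_dec_T a2 b2); [|right; congruence].
  destruct (Req_dec_T a3 b3); [|right; congruence].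
  destruct (Req_dec_T a4 b4); [|right; congruence].
  left; subst; reflexivity.
Defined.

Definition memb (C : list seg) (s : seg) : bool := if in_dec seg_dec s C then true else false.
Lemma memb_spec C s : memb C s = true <-> In s C.
Proof. unfold memb; destruct (in_dec seg_dec s C); split; intros; auto; discriminate. Qed.

Definition cnt (C : list seg) (l : list seg) : nat := length (filter (memb C) l).

Lemma minsub x y : x - (x - y) = Nat.min x y.
Proof. lia. Qed.

Lemma tab_lower N C t : forall L R B T,
  (forall c cxc, In (c, cxc) (leafctx t (L, R, B, T)) -> exists s, In s (comps cxc) /\ In s C) ->
  tab N t (memb C L) (memb C R) (memb C B) (memb C T) <= cnt C (split_segs t).
Proof.
  induction t as [r|r sp l IHl rt IHr]; intros L R B T H.
  - destruct (H r (L, R, B, T)) as [s [Hs Hc]]; [simpl; auto|].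
    simpl in Hs. apply memb_spec in Hc.
    destruct Hs as [<-|[<-|[<-|[<-|[]]]]]; rewrite Hc; simpl;
    repeat match goal with |- context [if ?b then _ else _] => destruct b end; lia.
  - unfold cnt; simpl. set (s := split_seg r sp).
    assert (Hl : forall L' R' B' T', (forall c cxc, In (c, cxc) (leafctx l (L', R', B', T')) -> In (c, cxc) (leafctx (Node r sp l rt) (L, R, B, T))) ->
                 tab N l (memb C L') (memb C R') (memb C B') (memb C T') <= cnt C (split_segs l)).
    { intros. apply IHl. intros; eapply H; eauto. }
    assert (Hr : forall L' R' B' T', (forall c cxc, In (c, cxc) (leafctx rt (L', R', B', T')) -> In (c, cxc) (leafctx (Node r sp l rt) (L, R, B, T))) ->
                 tab N rt (memb C L') (memb C R') (memb C B') (memb C T') <= cnt C (split_segs rt)).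
    { intros. apply IHr. intros; eapply H; eauto. }
    destruct sp as [a|b]; simpl in Hl, Hr.
    + specialize (Hl L s B T ltac:(intros c cxc Hi; simpl; apply in_or_app; left; exact Hi)).
      specialize (Hr s R B T ltac:(intros c cxc Hi; simpl; apply in_or_app; right; exact Hi)).
      unfold cnt in Hl, Hr. rewrite minsub. fold s.
      destruct (memb C s); simpl; rewrite filter_app, length_app; simpl; lia.
    + specialize (Hl L R B s ltac:(intros c cxc Hi; simpl; apply in_or_app; left; exact Hi)).
      specialize (Hr L R s T ltac:(intros c cxc Hi; simpl; apply in_or_app; right; exact Hi)).
      unfold cnt in Hl, Hr. rewrite minsub. fold s.
      destruct (memb C s); simpl; rewrite filter_app, length_app; simpl; lia.
Qed.

Lemma chosen_in L R B T b1 b2 b3 b4 x :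
  In x (chosen (L, R, B, T) b1 b2 b3 b4) <->
  (b1 = true /\ x = L) \/ (b2 = true /\ x = R) \/ (b3 = true /\ x = B) \/ (b4 = true /\ x = T).
Proof.
  simpl. destruct b1, b2, b3, b4; simpl; intuition (subst; auto; try discriminate).
Qed.

Lemma reconL_incl N t : forall b1 b2 b3 b4, incl (reconL N t b1 b2 b3 b4) (split_segs t).
Proof.
  induction t as [r|r sp l IHl rt IHr]; intros b1 b2 b3 b4; [intros x []|].
  destruct sp; cbn [reconL split_segs]; intros x Hx;
  repeat (apply in_app_or in Hx; destruct Hx as [Hx|Hx]);
  try (right; apply in_or_app; right; eapply IHr; eauto; fail);
  try (right; apply in_or_app; left; eapply IHl; eauto; fail);
  match type of Hx with context [if ?c then _ else _] => destruct c end;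
  simpl in Hx; intuition (subst; simpl; auto).
Qed.

Lemma NoDup_app_disj (A : Type) (l1 l2 : list A) :
  NoDup l1 -> NoDup l2 -> (forall x, In x l1 -> In x l2 -> False) -> NoDup (l1 ++ l2).
Proof.
  induction l1 as [|a l1 IH]; intros N1 N2 D; simpl; auto.
  inversion N1; subst. constructor.
  - intros Hin. apply in_app_or in Hin. destruct Hin; [contradiction|]. apply (D a); simpl; auto.
  - apply IH; auto. intros x Hx1 Hx2. apply (D x); simpl; auto.
Qed.

Lemma NoDup_app_inv (A : Type) (l1 l2 : list A) :
  NoDup (l1 ++ l2) -> NoDup l1 /\ NoDup l2 /\ (forall x, In x l1 -> In x l2 -> False).
Proof.
  induction l1 as [|a l1 IH]; intros H; simpl in *.
  - repeat split; auto. constructor.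
  - inversion H; subst. destruct (IH H3) as [A1 [A2 A3]]. repeat split; auto.
    + constructor; auto. intros Hin; apply H2; apply in_or_app; auto.
    + intros x [<-|Hx] Hy; [apply H2; apply in_or_app; auto | eauto].
Qed.

Lemma reconL_nodup N t : NoDup (split_segs t) -> forall b1 b2 b3 b4, NoDup (reconL N t b1 b2 b3 b4).
Proof.
  induction t as [r|r sp l IHl rt IHr]; intros ND b1 b2 b3 b4; [constructor|].
  cbn [split_segs] in ND. inversion ND as [|s0 l0 Hs ND']; subst.
  destruct (NoDup_app_inv _ _ _ ND') as [NDl [NDr D]].
  destruct sp; cbn [reconL];
  (match goal with |- context [if ?c then _ else _] => destruct c end);
  repeat apply NoDup_app_disj; try (apply IHl; auto); try (apply IHr; auto);
  try (repeat constructor; simpl; tauto);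
  intros x Hx1 Hx2; simpl in *;
  repeat match goal with
  | H : In _ (_ ++ _) |- _ => apply in_app_or in H; destruct H
  | H : In _ [_] |- _ => destruct H as [<-|[]]
  | H : _ = _ \/ False |- _ => destruct H as [<-|[]]
  | H : In _ [] |- _ => destruct H
  end;
  repeat match goal with H : In ?x (reconL N ?u _ _ _ _) |- _ => apply reconL_incl in H end;
  try (apply Hs; apply in_or_app; auto; fail); eauto.
Qed.

Lemma leaf_tab_lt N r b1 b2 b3 b4 : tab N (Leaf r) b1 b2 b3 b4 < N ->
  tab N (Leaf r) b1 b2 b3 b4 = 0 /\ (b1 = true \/ b2 = true \/ b3 = true \/ b4 = true).
Proof. destruct b1, b2, b3, b4; simpl; intros; auto; lia. Qed.

Lemma tab_upper N t : forall L R B T b1 b2 b3 b4, tab N t b1 b2 b3 b4 < N ->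
  length (reconL N t b1 b2 b3 b4) = tab N t b1 b2 b3 b4 /\
  (forall c cxc, In (c, cxc) (leafctx t (L, R, B, T)) -> exists s, In s (comps cxc) /\
      (In s (reconL N t b1 b2 b3 b4) \/ In s (chosen (L, R, B, T) b1 b2 b3 b4))).
Proof.
  induction t as [r|r sp l IHl rt IHr]; intros L R B T b1 b2 b3 b4 Hlt.
  - destruct (leaf_tab_lt _ _ _ _ _ _ Hlt) as [H0 Hb]. rewrite H0. split; [reflexivity|].
    intros c cxc [H|[]]. injection H; intros; subst.
    destruct Hb as [Hb|[Hb|[Hb|Hb]]]; subst;
    [exists L | exists R | exists B | exists T]; (split; [simpl; auto | right; apply chosen_in; tauto]).
  - destruct sp as [a|b]; cbn [tab reconL leafctx] in *; rewrite minsub in Hlt |- *.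
    + set (x := tab N l b1 false b3 b4 + tab N rt false b2 b3 b4) in *.
      set (y := 1 + tab N l b1 true b3 b4 + tab N rt true b2 b3 b4) in *.
      destruct (Nat.ltb y x) eqn:Ec.
      * apply Nat.ltb_lt in Ec.
        destruct (IHl L (split_seg r (VSplit a)) B T b1 true b3 b4 ltac:(unfold y in *; lia)) as [Ll Cl].
        destruct (IHr (split_seg r (VSplit a)) R B T true b2 b3 b4 ltac:(unfold y in *; lia)) as [Lr Cr].
        split.
        { rewrite !length_app, Ll, Lr. simpl. unfold y in *; lia. }
        intros c cxc Hi. apply in_app_or in Hi. destruct Hi as [Hi|Hi];
        [destruct (Cl _ _ Hi) as [s' [Hs' [Hin|Hin]]] | destruct (Cr _ _ Hi) as [s' [Hs' [Hin|Hin]]]];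
        exists s'; split; auto;
        try (left; repeat (apply in_or_app; (left; assumption) || right); fail);
        try (left; apply in_or_app; right; apply in_or_app; left; assumption);
        try (left; apply in_or_app; left; assumption);
        apply chosen_in in Hin; rewrite chosen_in;
        intuition (subst; auto; try (left; apply in_or_app; right; apply in_or_app; right; simpl; auto)).
      * apply Nat.ltb_ge in Ec.
        destruct (IHl L (split_seg r (VSplit a)) B T b1 false b3 b4 ltac:(unfold x, y in *; lia)) as [Ll Cl].
        destruct (IHr (split_seg r (VSplit a)) R B T false b2 b3 b4 ltac:(unfold x, y in *; lia)) as [Lr Cr].
        split.
        { rewrite !length_app, Ll, Lr. simpl. unfold x, y in *; lia. }
        intros c cxc Hi. apply in_app_or in Hi. destruct Hi as [Hi|Hi];
        [destruct (Cl _ _ Hi) as [s' [Hs' [Hin|Hin]]] | destruct (Cr _ _ Hi) as [s' [Hs' [Hin|Hin]]]];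
        exists s'; split; auto;
        try (left; apply in_or_app; right; apply in_or_app; left; assumption);
        try (left; apply in_or_app; left; assumption);
        apply chosen_in in Hin; rewrite chosen_in;
        intuition (subst; auto; discriminate).
    + set (x := tab N l b1 b2 b3 false + tab N rt b1 b2 false b4) in *.
      set (y := 1 + tab N l b1 b2 b3 true + tab N rt b1 b2 true b4) in *.
      destruct (Nat.ltb y x) eqn:Ec.
      * apply Nat.ltb_lt in Ec.
        destruct (IHl L R B (split_seg r (HSplit b)) b1 b2 b3 true ltac:(unfold y in *; lia)) as [Ll Cl].
        destruct (IHr L R (split_seg r (HSplit b)) T b1 b2 true b4 ltac:(unfold y in *; lia)) as [Lr Cr].
        split.
        { rewrite !length_app, Ll, Lr. simpl. unfold y in *; lia. }
        intros c cxc Hi. apply in_app_or in Hi. destruct Hi as [Hi|Hi];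
        [destruct (Cl _ _ Hi) as [s' [Hs' [Hin|Hin]]] | destruct (Cr _ _ Hi) as [s' [Hs' [Hin|Hin]]]];
        exists s'; split; auto;
        try (left; apply in_or_app; right; apply in_or_app; left; assumption);
        try (left; apply in_or_app; left; assumption);
        apply chosen_in in Hin; rewrite chosen_in;
        intuition (subst; auto; try (left; apply in_or_app; right; apply in_or_app; right; simpl; auto)).
      * apply Nat.ltb_ge in Ec.
        destruct (IHl L R B (split_seg r (HSplit b)) b1 b2 b3 false ltac:(unfold x, y in *; lia)) as [Ll Cl].
        destruct (IHr L R (split_seg r (HSplit b)) T b1 b2 false b4 ltac:(unfold x, y in *; lia)) as [Lr Cr].
        split.
        { rewrite !length_app, Ll, Lr. simpl. unfold x, y in *; lia. }
        intros c cxc Hi. apply in_app_or in Hi. destruct Hi as [Hi|Hi];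
        [destruct (Cl _ _ Hi) as [s' [Hs' [Hin|Hin]]] | destruct (Cr _ _ Hi) as [s' [Hs' [Hin|Hin]]]];
        exists s'; split; auto;
        try (left; apply in_or_app; right; apply in_or_app; left; assumption);
        try (left; apply in_or_app; left; assumption);
        apply chosen_in in Hin; rewrite chosen_in;
        intuition (subst; auto; discriminate).
Qed.

Import ListNotations.
Open Scope R_scope.

Definition hs (y x1 x2 : R) : seg := ((x1, y), (x2, y)).
Definition vs (x y1 y2 : R) : seg := ((x, y1), (x, y2)).

Definition wfseg (s : seg) : Prop :=
  (exists y x1 x2, s = hs y x1 x2 /\ x1 < x2) \/ (exists x y1 y2, s = vs x y1 y2 /\ y1 < y2).

Definition ovl (s u : seg) : Prop :=
  (exists y a1 a2 b1 b2 p q, s = hs y a1 a2 /\ u = hs y b1 b2 /\ p < q /\ a1 <= p /\ q <= a2 /\ b1 <= p /\ q <= b2) \/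
  (exists x a1 a2 b1 b2 p q, s = vs x a1 a2 /\ u = vs x b1 b2 /\ p < q /\ a1 <= p /\ q <= a2 /\ b1 <= p /\ q <= b2).

Definition inside (r : rect) (s : seg) : Prop :=
  (exists x y1 y2, s = vs x y1 y2 /\ rxl r < x < rxh r /\ ryl r <= y1 /\ y1 < y2 /\ y2 <= ryh r) \/
  (exists y x1 x2, s = hs y x1 x2 /\ ryl r < y < ryh r /\ rxl r <= x1 /\ x1 < x2 /\ x2 <= rxh r).

Ltac dall := repeat match goal with
  | H : _ /\ _ |- _ => destruct H
  | H : exists _, _ |- _ => destruct H
  | H : _ \/ _ |- _ => destruct H
  | H : (_, _) = (_, _) |- _ => injection H; clear H; intros
  end.
Ltac geo := unfold ovl, inside, wfseg, hs, vs in *; dall; subst; dall; subst; dall; subst; simpl in *; try lra.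

Fixpoint pw (l : list seg) : Prop :=
  match l with [] => True | s :: l' => (forall u, In u l' -> ~ ovl s u) /\ pw l' end.

Lemma ovl_sym s u : ovl s u -> ovl u s.
Proof.
  unfold ovl; intros [H|H]; dall; [left|right]; do 7 eexists; repeat split; eauto.
Qed.

Lemma ovl_refl s : wfseg s -> ovl s s.
Proof.
  unfold wfseg, ovl; intros [H|H]; dall.
  - left; do 7 eexists; repeat split; [eauto | eauto | exact H0 | | | |]; lra.
  - right; do 7 eexists; repeat split; [eauto | eauto | exact H0 | | | |]; lra.
Qed.

Lemma pw_app l1 l2 : pw l1 -> pw l2 -> (forall a b, In a l1 -> In b l2 -> ~ ovl a b) -> pw (l1 ++ l2).
Proof.
  induction l1 as [|a l1 IH]; simpl; intros P1 P2 D; auto.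
  destruct P1 as [P1a P1b]. split.
  - intros u Hu. apply in_app_or in Hu. destruct Hu; [auto | apply D; auto].
  - apply IH; auto.
Qed.

Lemma pw_nodup l : (forall s, In s l -> wfseg s) -> pw l -> NoDup l.
Proof.
  induction l as [|a l IH]; simpl; intros W P; constructor.
  - intros Hin. destruct P as [P _]. apply (P a Hin). apply ovl_refl; auto.
  - apply IH; [intros; apply W; auto | tauto].
Qed.

Lemma pw_eq l s u : pw l -> In s l -> In u l -> ovl s u -> s = u.
Proof.
  induction l as [|a l IH]; simpl; intros P Hs Hu O; [contradiction|].
  destruct P as [P1 P2]. destruct Hs as [<-|Hs]; destruct Hu as [<-|Hu]; auto.
  - exfalso; apply (P1 u Hu O).
  - exfalso; apply (P1 s Hs (ovl_sym _ _ O)).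
Qed.

Definition sub_rect (r' r : rect) : Prop :=
  rxl r <= rxl r' /\ rxh r' <= rxh r /\ ryl r <= ryl r' /\ ryh r' <= ryh r.

Lemma inside_sub r' r s : sub_rect r' r -> inside r' s -> inside r s.
Proof.
  unfold sub_rect, inside; intros Hs [H|H]; dall; [left|right]; do 3 eexists; repeat split; eauto; lra.
Qed.

Lemma root_rect_valid t : valid_tree t -> rxl (root_rect t) < rxh (root_rect t) /\ ryl (root_rect t) < ryh (root_rect t).
Proof. destruct t; simpl; tauto. Qed.

Lemma split_inside t : valid_tree t -> forall s, In s (split_segs t) -> inside (root_rect t) s.
Proof.
  induction t as [r|r sp l IHl rt IHr]; intros V s Hs; simpl in Hs; [contradiction|].
  simpl in V. destruct V as [Vx [Vy [Vs [Vl Vr]]]]. simpl.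
  destruct Hs as [<-|Hs].
  - destruct sp as [a|b]; simpl in Vs.
    + left. exists a, (ryl r), (ryh r). unfold vs; repeat split; auto; lra.
    + right. exists b, (rxl r), (rxh r). unfold hs; repeat split; auto; lra.
  - apply in_app_or in Hs. destruct Hs as [Hs|Hs].
    + apply (inside_sub (root_rect l)); [|apply IHl; auto].
      destruct sp; simpl in Vs; destruct Vs as [Va [El Er]]; rewrite El; unfold sub_rect; simpl; lra.
    + apply (inside_sub (root_rect rt)); [|apply IHr; auto].
      destruct sp; simpl in Vs; destruct Vs as [Va [El Er]]; rewrite Er; unfold sub_rect; simpl; lra.
Qed.

Lemma pw_splits t : valid_tree t -> pw (split_segs t).
Proof.
  induction t as [r|r sp l IHl rt IHr]; intros V; simpl; [auto|].
  assert (V' := V). simpl in V'. destruct V' as [Vx [Vy [Vs [Vl Vr]]]].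
  pose proof (split_inside l Vl) as Il. pose proof (split_inside rt Vr) as Ir.
  split.
  - intros u Hu. apply in_app_or in Hu.
    destruct sp as [a|b]; simpl in Vs; destruct Vs as [Va [El Er]]; rewrite ?El, ?Er in *;
    destruct Hu as [Hu|Hu]; [apply Il in Hu | apply Ir in Hu | apply Il in Hu | apply Ir in Hu];
    rewrite ?El, ?Er in Hu; simpl in *; intro O; geo.
  - apply pw_app; auto.
    intros u w Hu Hw. apply Il in Hu. apply Ir in Hw.
    destruct sp as [a|b]; simpl in Vs; destruct Vs as [Va [El Er]]; rewrite El in Hu; rewrite Er in Hw;
    simpl in *; intro O; geo.
Qed.

Lemma wf_inside r s : inside r s -> wfseg s.
Proof. intros H; geo; [right | left]; do 3 eexists; split; eauto. Qed.

Lemma segs_wf t : valid_tree t -> forall s, In s (segments t) -> wfseg s.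
Proof.
  intros V s Hs. unfold segments in Hs. apply in_app_or in Hs.
  destruct (root_rect_valid t V) as [Vx Vy].
  destruct Hs as [Hs|Hs].
  - simpl in Hs. unfold wfseg, hs, vs.
    destruct Hs as [<-|[<-|[<-|[<-|[]]]]];
    [left|left|right|right]; do 3 eexists; split; try reflexivity; lra.
  - eapply wf_inside; eapply split_inside; eauto.
Qed.

Lemma pw_segments t : valid_tree t -> pw (segments t).
Proof.
  intros V. unfold segments. destruct (root_rect_valid t V) as [Vx Vy].
  pose proof (split_inside t V) as I.
  apply pw_app.
  - simpl. repeat split; intros u Hu; simpl in Hu; dall; subst; intro O; geo.
  - apply pw_splits; auto.
  - intros a b Ha Hb. apply I in Hb. simpl in Ha. dall; subst; intro O; geo.
Qed.

Lemma segs_nodup t : valid_tree t -> NoDup (segments t).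
Proof. intros V. apply pw_nodup; [apply segs_wf; auto | apply pw_segments; auto]. Qed.

Definition frame (r : rect) (cx : ctx4) : Prop :=
  let '(L, R, B, T) := cx in
  (exists y1 y2, L = vs (rxl r) y1 y2 /\ y1 <= ryl r /\ ryh r <= y2) /\
  (exists y1 y2, R = vs (rxh r) y1 y2 /\ y1 <= ryl r /\ ryh r <= y2) /\
  (exists x1 x2, B = hs (ryl r) x1 x2 /\ x1 <= rxl r /\ rxh r <= x2) /\
  (exists x1 x2, T = hs (ryh r) x1 x2 /\ x1 <= rxl r /\ rxh r <= x2).

Ltac fr := repeat match goal with
  | |- _ /\ _ => split
  | |- exists _, _ => eexists
  end; try reflexivity; try eassumption; try lra.

Lemma leafctx_frame t : valid_tree t -> forall cx, frame (root_rect t) cx ->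
  forall c cxc, In (c, cxc) (leafctx t cx) -> frame c cxc /\ rxl c < rxh c /\ ryl c < ryh c.
Proof.
  induction t as [r|r sp l IHl rt IHr]; intros V [[[L R] B] T] F c cxc H.
  - simpl in H. destruct H as [H|[]]. injection H; intros; subst. simpl in V. tauto.
  - assert (V' := V). simpl in V'. destruct V' as [Vx [Vy [Vs [Vl Vr]]]].
    simpl in F. destruct F as [[yl1 [yl2 [EL [HL1 HL2]]]] [[yr1 [yr2 [ER [HR1 HR2]]]]
      [[xb1 [xb2 [EB [HB1 HB2]]]] [xt1 [xt2 [ET [HT1 HT2]]]]]]]. subst L R B T.
    destruct sp as [a|b]; simpl in Vs; destruct Vs as [Va [El Er]]; simpl in H;
    apply in_app_or in H; destruct H as [H|H];
    [eapply IHl; [exact Vl | | exact H]; rewrite El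
    |eapply IHr; [exact Vr | | exact H]; rewrite Er
    |eapply IHl; [exact Vl | | exact H]; rewrite El
    |eapply IHr; [exact Vr | | exact H]; rewrite Er]; simpl; unfold vs, hs; fr.
Qed.

Lemma div01 a b : 0 < b -> 0 <= a <= b -> 0 <= a / b <= 1.
Proof.
  intros Hb [Ha1 Ha2]. unfold Rdiv. split.
  - apply Rmult_le_pos; [lra | apply Rlt_le, Rinv_0_lt_compat; lra].
  - rewrite <- (Rinv_r b) by lra. apply Rmult_le_compat_r; [apply Rlt_le, Rinv_0_lt_compat; lra | lra].
Qed.

Lemma on_seg_vs_1 x y1 y2 z : y1 <= y2 -> on_seg (vs x y1 y2) z -> fst z = x /\ y1 <= snd z <= y2.
Proof.
  unfold on_seg, vs; simpl. intros Hy [t [Ht [E1 E2]]]. split; [lra|].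
  rewrite E2. split; nra.
Qed.
Lemma on_seg_hs_1 y x1 x2 z : x1 <= x2 -> on_seg (hs y x1 x2) z -> snd z = y /\ x1 <= fst z <= x2.
Proof.
  unfold on_seg, hs; simpl. intros Hy [t [Ht [E1 E2]]]. split; [lra|].
  rewrite E1. split; nra.
Qed.
Lemma on_seg_vs_2 x y1 y2 z : y1 < y2 -> fst z = x -> y1 <= snd z <= y2 -> on_seg (vs x y1 y2) z.
Proof.
  unfold on_seg, vs; simpl. intros Hy E Hz. exists ((snd z - y1) / (y2 - y1)).
  split; [apply div01; lra|]. split; [lra|]. field. lra.
Qed.
Lemma on_seg_hs_2 y x1 x2 z : x1 < x2 -> snd z = y -> x1 <= fst z <= x2 -> on_seg (hs y x1 x2) z.
Proof.
  unfold on_seg, hs; simpl. intros Hy E Hz. exists ((fst z - x1) / (x2 - x1)).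
  split; [apply div01; lra|]. split; [field; lra | lra].
Qed.

Lemma frame_covers c cx : rxl c < rxh c -> ryl c < ryh c -> frame c cx ->
  forall s, In s (comps cx) -> covers_cell s c.
Proof.
  destruct cx as [[[L R] B] T]. intros Vx Vy F s Hs. simpl in F, Hs.
  destruct F as [[yl1 [yl2 [EL [HL1 HL2]]]] [[yr1 [yr2 [ER [HR1 HR2]]]]
      [[xb1 [xb2 [EB [HB1 HB2]]]] [xt1 [xt2 [ET [HT1 HT2]]]]]]].
  unfold covers_cell, on_boundary, in_closed, in_open.
  destruct Hs as [<-|[<-|[<-|[<-|[]]]]]; subst.
  - exists (rxl c, ryl c), (rxl c, ryh c). split; [intro H; injection H; lra|].
    intros z Hz. apply (on_seg_vs_1 (rxl c) (ryl c) (ryh c)) in Hz; [|lra]. destruct Hz as [Ez Hz].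
    split; [apply on_seg_vs_2; lra|]. rewrite Ez. split; [lra | intros [[? ?] _]; lra].
  - exists (rxh c, ryl c), (rxh c, ryh c). split; [intro H; injection H; lra|].
    intros z Hz. apply (on_seg_vs_1 (rxh c) (ryl c) (ryh c)) in Hz; [|lra]. destruct Hz as [Ez Hz].
    split; [apply on_seg_vs_2; lra|]. rewrite Ez. split; [lra | intros [[? ?] _]; lra].
  - exists (rxl c, ryl c), (rxh c, ryl c). split; [intro H; injection H; lra|].
    intros z Hz. apply (on_seg_hs_1 (ryl c) (rxl c) (rxh c)) in Hz; [|lra]. destruct Hz as [Ez Hz].
    split; [apply on_seg_hs_2; lra|]. rewrite Ez. split; [lra | intros [_ [? ?]]; lra].
  - exists (rxl c, ryh c), (rxh c, ryh c). split; [intro H; injection H; lra|].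
    intros z Hz. apply (on_seg_hs_1 (ryh c) (rxl c) (rxh c)) in Hz; [|lra]. destruct Hz as [Ez Hz].
    split; [apply on_seg_hs_2; lra|]. rewrite Ez. split; [lra | intros [_ [? ?]]; lra].
Qed.

Lemma covers_ovl c cx s : rxl c < rxh c -> ryl c < ryh c -> frame c cx -> wfseg s -> covers_cell s c ->
  exists u, In u (comps cx) /\ ovl s u.
Proof.
  destruct cx as [[[L R] B] T]. intros Vx Vy F W [p [q [Hpq H]]]. simpl in F.
  destruct F as [[yl1 [yl2 [EL [HL1 HL2]]]] [[yr1 [yr2 [ER [HR1 HR2]]]]
      [[xb1 [xb2 [EB [HB1 HB2]]]] [xt1 [xt2 [ET [HT1 HT2]]]]]]]. subst L R B T.
  assert (Op : on_seg (p, q) p) by (exists 0; simpl; split; [lra | split; ring]).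
  assert (Oq : on_seg (p, q) q) by (exists 1; simpl; split; [lra | split; ring]).
  set (mid := ((fst p + fst q) / 2, (snd p + snd q) / 2)).
  assert (Om : on_seg (p, q) mid) by (exists (1/2); simpl; split; [lra | split; lra]).
  destruct (H p Op) as [Sp Bp]. destruct (H q Oq) as [Sq Bq]. destruct (H mid Om) as [Sm Bm].
  unfold on_boundary, in_closed, in_open in Bp, Bq, Bm.
  destruct p as [px py]. destruct q as [qx qy]. unfold mid in *; simpl in *.
  destruct W as [[y [x1 [x2 [Es Hx]]]] | [x [y1 [y2 [Es Hy]]]]]; subst s.
  - apply on_seg_hs_1 in Sp; [|lra]. apply on_seg_hs_1 in Sq; [|lra]. apply on_seg_hs_1 in Sm; [|lra].
    simpl in *. assert (px <> qx) by (intro; apply Hpq; f_equal; lra).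
    assert (y = ryl c \/ y = ryh c) as Hy.
    { destruct (Req_dec_T y (ryl c)); [auto|]. destruct (Req_dec_T y (ryh c)); [auto|].
      exfalso. apply (proj2 Bm). split; [|lra].
      destruct (Rlt_dec px qx); split; lra. }
    destruct Hy as [Hy|Hy]; subst y.
    + exists (hs (ryl c) xb1 xb2). split; [simpl; auto 6|].
      left. exists (ryl c), x1, x2, xb1, xb2, (Rmin px qx), (Rmax px qx).
      unfold Rmin, Rmax. destruct (Rle_dec px qx); repeat split; lra.
    + exists (hs (ryh c) xt1 xt2). split; [simpl; auto 6|].
      left. exists (ryh c), x1, x2, xt1, xt2, (Rmin px qx), (Rmax px qx).
      unfold Rmin, Rmax. destruct (Rle_dec px qx); repeat split; lra.
  - apply on_seg_vs_1 in Sp; [|lra]. apply on_seg_vs_1 in Sq; [|lra]. apply on_seg_vs_1 in Sm; [|lra].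
    simpl in *. assert (py <> qy) by (intro; apply Hpq; f_equal; lra).
    assert (x = rxl c \/ x = rxh c) as Hx.
    { destruct (Req_dec_T x (rxl c)); [auto|]. destruct (Req_dec_T x (rxh c)); [auto|].
      exfalso. apply (proj2 Bm). split; [lra|].
      destruct (Rlt_dec py qy); split; lra. }
    destruct Hx as [Hx|Hx]; subst x.
    + exists (vs (rxl c) yl1 yl2). split; [simpl; auto 6|].
      right. exists (rxl c), y1, y2, yl1, yl2, (Rmin py qy), (Rmax py qy).
      unfold Rmin, Rmax. destruct (Rle_dec py qy); repeat split; lra.
    + exists (vs (rxh c) yr1 yr2). split; [simpl; auto 6|].
      right. exists (rxh c), y1, y2, yr1, yr2, (Rmin py qy), (Rmax py qy).
      unfold Rmin, Rmax. destruct (Rle_dec py qy); repeat split; lra.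
Qed.

Import ListNotations.
Open Scope nat_scope.

Lemma pick_fstn a b : fstn (pickv a b) = Nat.min (fstn a) (fstn b).
Proof.
  unfold pickv. rewrite vif_spec.
  destruct (Nat.ltb_spec (fstn b) (fstn a)); lia.
Qed.
Lemma pick_le_l a b : fstn (pickv a b) <= fstn a.
Proof. rewrite pick_fstn; lia. Qed.
Lemma pick_le_r a b : fstn (pickv a b) <= fstn b.
Proof. rewrite pick_fstn; lia. Qed.
Lemma pick_in (Q : val -> Prop) a b : Q a -> Q b -> Q (pickv a b).
Proof. unfold pickv. rewrite vif_spec. destruct (Nat.ltb _ _); auto. Qed.

Ltac tchain := match goal with
  | |- fstn (pickv _ _) <= _ =>
      first [ eapply Nat.le_trans; [apply pick_le_l | tchain]
            | eapply Nat.le_trans; [apply pick_le_r | tchain] ]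
  | _ => apply Nat.le_refl
  end.

Lemma tour_prop (g : bool -> bool -> bool -> bool -> val) :
  (exists b1 b2 b3 b4, tourv g = g b1 b2 b3 b4) /\
  (forall b1 b2 b3 b4, fstn (tourv g) <= fstn (g b1 b2 b3 b4)).
Proof.
  split.
  - unfold tourv. repeat apply (pick_in (fun x => exists b1 b2 b3 b4, x = g b1 b2 b3 b4));
    do 4 eexists; reflexivity.
  - intros b1 b2 b3 b4. unfold tourv. destruct b1, b2, b3, b4; tchain.
Qed.

Definition cv (N : nat) (f : bool -> bool -> bool -> bool -> nat) b1 b2 b3 b4 : nat :=
  if orb b1 (orb b2 (orb b3 b4)) then cnt4 b1 b2 b3 b4 + f b1 b2 b3 b4 else N.

Lemma best_spec t : exists b1 b2 b3 b4,
  bestv t = candv (NN t) (tab (NN t) t) b1 b2 b3 b4 /\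
  forall c1 c2 c3 c4, cv (NN t) (tab (NN t) t) b1 b2 b3 b4 <= cv (NN t) (tab (NN t) t) c1 c2 c3 c4.
Proof.
  destruct (tour_prop (candv (NN t) (tab (NN t) t))) as [[b1 [b2 [b3 [b4 E]]]] Hle].
  exists b1, b2, b3, b4. split; [exact E|].
  intros c1 c2 c3 c4. specialize (Hle c1 c2 c3 c4). unfold bestv. rewrite E in Hle. exact Hle.
Qed.

Definition edges_sel (r : rect) (b1 b2 b3 b4 : bool) : list seg :=
  (if b4 then [edgeT r] else []) ++ (if b3 then [edgeB r] else []) ++
  (if b2 then [edgeR r] else []) ++ (if b1 then [edgeL r] else []).

Lemma accv_eq r b1 b2 b3 b4 : accv r b1 b2 b3 b4 = enc_segs (edges_sel r b1 b2 b3 b4).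
Proof. unfold accv. rewrite !vif_spec. destruct b1, b2, b3, b4; reflexivity. Qed.

Lemma finalv_eq t b1 b2 b3 b4 : bestv t = candv (NN t) (tab (NN t) t) b1 b2 b3 b4 ->
  finalv t = enc_segs (reconL (NN t) t b1 b2 b3 b4 ++ edges_sel (root_rect t) b1 b2 b3 b4).
Proof.
  intros E. unfold finalv. rewrite E. unfold candv, stv, fres.
  rewrite accv_eq, reconv_eq. reflexivity.
Qed.

Lemma split_len t : length (split_segs t) <= tree_size t.
Proof. induction t; simpl; [lia|]. rewrite length_app. lia. Qed.

Definition cx0 (r : rect) : ctx4 := (edgeL r, edgeR r, edgeB r, edgeT r).

Lemma frame0 t : frame (root_rect t) (cx0 (root_rect t)).
Proof. unfold cx0, frame, edgeL, edgeR, edgeB, edgeT, vs, hs. fr. Qed.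

Lemma comps0_in r s : In s (comps (cx0 r)) -> In s (boundary_edges r).
Proof. unfold cx0, comps, boundary_edges, edgeL, edgeR, edgeB, edgeT. simpl. intuition. Qed.

Lemma leaf_comps_segs t c cxc : In (c, cxc) (leafctx t (cx0 (root_rect t))) ->
  forall s, In s (comps cxc) -> In s (segments t).
Proof.
  intros H s Hs. destruct (leafctx_comps t _ c cxc H s Hs) as [H'|H']; unfold segments; apply in_or_app;
  [left; apply comps0_in; auto | right; auto].
Qed.

Lemma in_cells_ctx t cx c : In c (cells t) -> exists cxc, In (c, cxc) (leafctx t cx).
Proof.
  intros H. rewrite <- (leafctx_cells t cx) in H. apply in_map_iff in H.
  destruct H as [[c' cxc] [E H]]. simpl in E; subst. eauto.
Qed.

Lemma hit_of_cover t C : valid_tree t -> (forall s, In s C -> In s (segments t)) ->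
  (forall c, In c (cells t) -> exists s, In s C /\ covers_cell s c) ->
  forall c cxc, In (c, cxc) (leafctx t (cx0 (root_rect t))) -> exists s, In s (comps cxc) /\ In s C.
Proof.
  intros V Hsub Hcov c cxc H.
  assert (Hc : In c (cells t)) by (rewrite <- (leafctx_cells t (cx0 (root_rect t))); apply in_map_iff; exists (c, cxc); auto).
  destruct (Hcov c Hc) as [s [Hs Hsc]].
  destruct (leafctx_frame t V _ (frame0 t) c cxc H) as [F [Vx Vy]].
  destruct (covers_ovl c cxc s Vx Vy F (segs_wf t V s (Hsub s Hs)) Hsc) as [u [Hu O]].
  exists s. split; auto.
  rewrite (pw_eq (segments t) s u (pw_segments t V) (Hsub s Hs) (leaf_comps_segs t c cxc H u Hu) O). auto.
Qed.

Lemma cnt_app C l1 l2 : cnt C (l1 ++ l2) = cnt C l1 + cnt C l2.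
Proof. unfold cnt. rewrite filter_app, length_app. reflexivity. Qed.

Lemma cnt_bound C l : NoDup l -> NoDup C -> cnt C l <= length C.
Proof.
  intros Nl NC. unfold cnt. apply NoDup_incl_length.
  - apply NoDup_filter; auto.
  - intros x Hx. apply filter_In in Hx. apply memb_spec. tauto.
Qed.

Lemma cnt_edges C r : cnt C (boundary_edges r) =
  cnt4 (memb C (edgeL r)) (memb C (edgeR r)) (memb C (edgeB r)) (memb C (edgeT r)).
Proof.
  unfold cnt, boundary_edges, cnt4. simpl. fold (edgeB r) (edgeT r) (edgeL r) (edgeR r).
  destruct (memb C (edgeL r)), (memb C (edgeR r)), (memb C (edgeB r)), (memb C (edgeT r)); reflexivity.
Qed.

Lemma lower_main t C : valid_tree t -> NoDup C ->
  (forall c cxc, In (c, cxc) (leafctx t (cx0 (root_rect t))) -> exists s, In s (comps cxc) /\ In s C) ->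
  (exists s, In s C /\ In s (boundary_edges (root_rect t))) ->
  let r := root_rect t in
  cv (NN t) (tab (NN t) t) (memb C (edgeL r)) (memb C (edgeR r)) (memb C (edgeB r)) (memb C (edgeT r)) <= length C.
Proof.
  intros V NC Hit [s0 [Hs0 Hb0]] r.
  pose proof (tab_lower (NN t) C t (edgeL r) (edgeR r) (edgeB r) (edgeT r) Hit) as Lo.
  pose proof (cnt_bound C (segments t) (segs_nodup t V) NC) as Cb.
  unfold segments in Cb. rewrite cnt_app, cnt_edges in Cb. fold r in Cb.
  unfold cv.
  assert (Hne : orb (memb C (edgeL r)) (orb (memb C (edgeR r)) (orb (memb C (edgeB r)) (memb C (edgeT r)))) = true).
  { apply memb_spec in Hs0. unfold boundary_edges in Hb0. simpl in Hb0. fold r in Hb0.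
    destruct Hb0 as [<-|[<-|[<-|[<-|[]]]]];
    [change (((rxl r, ryl r), (rxh r, ryl r))) with (edgeB r) in Hs0
    |change (((rxl r, ryh r), (rxh r, ryh r))) with (edgeT r) in Hs0
    |change (((rxl r, ryl r), (rxl r, ryh r))) with (edgeL r) in Hs0
    |change (((rxh r, ryl r), (rxh r, ryh r))) with (edgeR r) in Hs0]; rewrite Hs0;
    repeat rewrite Bool.orb_true_r; reflexivity. }
  rewrite Hne. lia.
Qed.

Lemma edges_sel_len r b1 b2 b3 b4 : length (edges_sel r b1 b2 b3 b4) = cnt4 b1 b2 b3 b4.
Proof. destruct b1, b2, b3, b4; reflexivity. Qed.

Lemma edges_sel_in r b1 b2 b3 b4 s : In s (edges_sel r b1 b2 b3 b4) -> In s (boundary_edges r).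
Proof.
  unfold edges_sel, boundary_edges, edgeL, edgeR, edgeB, edgeT.
  destruct b1, b2, b3, b4; simpl; intuition.
Qed.

Lemma edges_sel_nodup r b1 b2 b3 b4 : (rxl r < rxh r)%R -> (ryl r < ryh r)%R -> NoDup (edges_sel r b1 b2 b3 b4).
Proof.
  intros Hx Hy. unfold edges_sel, edgeL, edgeR, edgeB, edgeT.
  destruct b1, b2, b3, b4; simpl; repeat constructor.
  all: let H := fresh "H" in intro H; simpl in H.
  all: repeat match goal with H : _ \/ _ |- _ => destruct H end.
  all: try contradiction.
  all: match goal with Heq : (_, _) = (_, _) |- _ => injection Heq; intros; lra end.
Qed.

Lemma chosen_sel r b1 b2 b3 b4 s : In s (chosen (cx0 r) b1 b2 b3 b4) -> In s (edges_sel r b1 b2 b3 b4).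
Proof.
  unfold cx0. intros H. apply chosen_in in H. unfold edges_sel.
  destruct b1, b2, b3, b4; simpl; intuition (subst; auto; try discriminate).
Qed.

Lemma outer_sel r b1 b2 b3 b4 : orb b1 (orb b2 (orb b3 b4)) = true ->
  exists s, In s (edges_sel r b1 b2 b3 b4) /\ In s (boundary_edges r).
Proof.
  intros H. unfold edges_sel, boundary_edges, edgeL, edgeR, edgeB, edgeT.
  destruct b1, b2, b3, b4; simpl in H; try discriminate; simpl.
  all: eexists; split; [left; reflexivity | simpl; auto 6].
Qed.

Definition Prog : program := [main_body; dp_body; rec_body; size_body; EUnit; finish_body].

Theorem theorem4_dev :
  exists (P : program) (c : nat),
    forall t : kdtree, valid_tree t ->
      exists (C : list seg) (k : nat),
        runs P (enc_tree t) (enc_segs C) k /\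
        (k <= c * tree_size t)%nat /\
        is_min_segment_cover t C.
Proof.
  exists Prog, (100 + 3000 + 3000 + 4200). intros t V.
  destruct (best_spec t) as [b1 [b2 [b3 [b4 [Eb Hmin]]]]].
  destruct (root_rect_valid t V) as [Vx Vy].
  set (r := root_rect t) in *. set (N := NN t) in *.
  exists (reconL N t b1 b2 b3 b4 ++ edges_sel r b1 b2 b3 b4).
  destruct (main_ok Prog empty_memory eq_refl eq_refl eq_refl eq_refl t V) as [k [E K]].
  exists k. split; [|split].
  { exists main_body, empty_memory. split; [reflexivity|]. rewrite (finalv_eq t b1 b2 b3 b4 Eb) in E. exact E. }
  { pose proof (tree_size_pos t). unfold cb in K. lia. }
  pose proof (segs_nodup t V) as NDs. unfold segments in NDs.
  destruct (NoDup_app_inv _ _ _ NDs) as [NDb [NDsp Dj]].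
  assert (Hfull : cv N (tab N t) b1 b2 b3 b4 < N).
  { eapply Nat.le_lt_trans; [apply Hmin|].
    eapply Nat.le_lt_trans.
    - apply (lower_main t (segments t) V (segs_nodup t V)).
      + intros c [[[L R] B] T] H. exists L. split; [simpl; auto|].
        apply (leaf_comps_segs t c _ H). simpl; auto.
      + exists (edgeB r). split; [unfold segments; apply in_or_app; left|]; simpl; auto.
    - unfold segments. rewrite length_app. simpl. pose proof (split_len t). unfold N, NN. lia. }
  assert (Hne : orb b1 (orb b2 (orb b3 b4)) = true /\ tab N t b1 b2 b3 b4 < N).
  { unfold cv in Hfull. destruct (orb b1 (orb b2 (orb b3 b4))); [split; [reflexivity | lia] | lia]. }
  destruct Hne as [Hne Htab].
  destruct (tab_upper N t (edgeL r) (edgeR r) (edgeB r) (edgeT r) b1 b2 b3 b4 Htab) as [Len Cov].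
  assert (LenC : length (reconL N t b1 b2 b3 b4 ++ edges_sel r b1 b2 b3 b4) = cv N (tab N t) b1 b2 b3 b4).
  { rewrite length_app, Len, edges_sel_len. unfold cv. rewrite Hne. lia. }
  split; [|split].
  - apply NoDup_app_disj.
    + apply reconL_nodup; auto.
    + apply edges_sel_nodup; auto.
    + intros x H1 H2. apply reconL_incl in H1. apply edges_sel_in in H2. eapply Dj; eauto.
  - split; [|split].
    + intros s Hs. unfold segments. apply in_app_or in Hs. apply in_or_app.
      destruct Hs as [Hs|Hs]; [right; eapply reconL_incl; eauto | left; eapply edges_sel_in; eauto].
    + intros c Hc. destruct (in_cells_ctx t (cx0 r) c Hc) as [cxc Hcc].
      destruct (Cov c cxc Hcc) as [s [Hs Hin]].
      destruct (leafctx_frame t V _ (frame0 t) c cxc Hcc) as [F [Cx Cy]].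
      exists s. split.
      * apply in_or_app. destruct Hin as [Hin|Hin]; [left; auto | right; apply chosen_sel; auto].
      * apply (frame_covers c cxc Cx Cy F s Hs).
    + destruct (outer_sel r b1 b2 b3 b4 Hne) as [s [Hs1 Hs2]].
      exists s. split; [apply in_or_app; right; auto | auto].
  - intros C' ND' [Hsub [Hcov Hout]].
    rewrite LenC. eapply Nat.le_trans; [apply Hmin|].
    apply (lower_main t C' V ND' (hit_of_cover t C' V Hsub Hcov) Hout).
Qed.


Open Scope R_scope.

Theorem theorem4 :
  exists (P : program) (c : nat),
    forall t : kdtree, valid_tree t ->
      exists (C : list seg) (k : nat),
        runs P (enc_tree t) (enc_segs C) k /\
        (k <= c * tree_size t)%nat /\
        is_min_segment_cover t C.
Proof. exact theorem4_dev. Qed.
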